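(* Each of the following real polynomial systems has an isochronous center at the origin $O$, with the indicated Urabe function $h$ (in each system with $\pm,\mp$ signs, the upper signs are taken throughout, or the lower signs are taken throughout): (i) $\dot x=-y+3x^{2}y\pm\sqrt2\,x^{3}y$, $\dot y=x\pm\sqrt2\,x^{2}\mp\frac{\sqrt2}{2}y^{2}+x^{3}+4xy^{2}\pm2\sqrt2\,x^{2}y^{2}\pm\frac{\sqrt2}{4}x^{4}$, with $h(\xi)=\mp\dfrac{\xi}{\sqrt{2+9\xi^{2}}}$; (ii) $\dot x=-y+x^{3}y$, $\dot y=x+\frac12x^{2}y^{2}-\frac12x^{4}$, with $h(\xi)=\dfrac{\xi^{3}}{\sqrt{4+\xi^{6}}}$.
   Context: For a real planar polynomial system $\dot x=-y+A(x,y)$, $\dot y=x+B(x,y)$, with $A,B$ polynomials having no terms of degree $<2$, the origin $O$ is a center if there is a punctured neighborhood of $O$ in which every orbit is a closed orbit surrounding $O$; it is an isochronous center if moreover all these closed orbits have the same period. Urabe function: consider a system $\dot x=p_0(x)+p_1(x)y$, $\dot y=q_0(x)+q_1(x)y+q_2(x)y^2$ with $p_i,q_i$ real polynomials, $p_0(0)=q_0(0)=0$, $p_1(0)\neq0$, and such that $-\frac{p_1'p_0}{p_1}+q_1+p_0'-\frac{2q_2p_0}{p_1}\equiv0$ (this holds automatically when $p_0\equiv q_1\equiv0$). Put $f=-\frac{q_2+p_1'}{p_1}$, $g=-\frac{q_2p_0^2}{p_1}+q_1p_0-p_1q_0$; the change of variables $z=p_0(x)+p_1(x)y$ transforms the system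 into $\dot x=z$, $\dot z=-g(x)-f(x)z^2$. Let $F(x)=\int_0^xf(s)\,ds$ and let $\xi$ be defined near $0$ by $\frac12\xi(x)^2=\int_0^xg(s)e^{2F(s)}ds$ with $x\xi(x)>0$ for $x\ne0$. When $O$ is an isochronous center, its Urabe function is the odd real-analytic function $h$ defined near $0$ satisfying $\dfrac{\xi(x)}{1+h(\xi(x))}=g(x)e^{F(x)}$ for $x$ near $0$. Here both systems have $p_0\equiv q_1\equiv0$. *)

(* Defs.v *)
From Stdlib Require Import Reals Lra.
Open Scope R_scope.

Definition is_solution (P Q : R -> R -> R) (x y : R -> R) : Prop :=
  forall t, derivable_pt_lim x t (P (x t) (y t)) /\
            derivable_pt_lim y t (Q (x t) (y t)).

Definition min_period (x y : R -> R) (T : R) : Prop :=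
  0 < T /\
  (forall t, x (t + T) = x t /\ y (t + T) = y t) /\
  (forall s, 0 < s < T -> (x s, y s) <> (x 0, y 0)).

(** The closed curve t in [0,T] |-> (x t, y t) surrounds the origin:
    it avoids O and has nonzero winding number around O, i.e. a continuous
    lift of the polar angle changes over one period. *)
Definition surrounds_origin (x y : R -> R) (T : R) : Prop :=
  (forall t, (x t, y t) <> (0, 0)) /\
  exists theta : R -> R,
    (forall t, continuity_pt theta t) /\
    (forall t, x t = sqrt (x t ^ 2 + y t ^ 2) * cos (theta t) /\
               y t = sqrt (x t ^ 2 + y t ^ 2) * sin (theta t)) /\
    theta T <> theta 0.

Definition closed_orbit_through (P Q : R -> R -> R) (a b T : R) : Prop :=
  exists x y : R -> R,
    is_solution P Q x y /\ x 0 = a /\ y 0 = b /\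
    min_period x y T /\ surrounds_origin x y T.

Definition is_center (P Q : R -> R -> R) : Prop :=
  exists delta, 0 < delta /\
    forall a b, 0 < a ^ 2 + b ^ 2 < delta ^ 2 ->
      exists T, closed_orbit_through P Q a b T.

Definition is_isochronous_center (P Q : R -> R -> R) : Prop :=
  exists delta T, 0 < delta /\
    forall a b, 0 < a ^ 2 + b ^ 2 < delta ^ 2 ->
      closed_orbit_through P Q a b T.

Definition analytic_near0 (h : R -> R) : Prop :=
  exists (a : nat -> R) (r : R), 0 < r /\
    forall u, Rabs u < r -> Pser a u (h u).

(** h is the Urabe function associated with f and g (case p0 = q1 = 0):
    F = int_0^x f, Phi = int_0^x g e^{2F}, (1/2) xi^2 = Phi, x xi(x) > 0,
    and xi/(1 + h(xi)) = g e^F near 0; h odd and real-analytic. *)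
Definition is_urabe_function (f g h : R -> R) : Prop :=
  (forall u, h (- u) = - h u) /\ analytic_near0 h /\
  exists eps, 0 < eps /\
  exists F Phi xi : R -> R,
    F 0 = 0 /\ Phi 0 = 0 /\
    forall x, - eps < x < eps ->
      derivable_pt_lim F x (f x) /\
      derivable_pt_lim Phi x (g x * exp (2 * F x)) /\
      / 2 * xi x ^ 2 = Phi x /\
      (x <> 0 -> 0 < x * xi x) /\
      xi x / (1 + h (xi x)) = g x * exp (F x).

(** f and g from p1, p1', q0, q2 when p0 = q1 = 0. *)
Definition urabe_f (p1 dp1 q2 : R -> R) (x : R) : R := - (q2 x + dp1 x) / p1 x.
Definition urabe_g (p1 q0 : R -> R) (x : R) : R := - (p1 x * q0 x).

(** System (i); s = 1 for upper signs, s = -1 for lower signs. *)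
Definition P1 (s x y : R) : R := - y + 3 * x ^ 2 * y + s * sqrt 2 * x ^ 3 * y.
Definition Q1 (s x y : R) : R :=
  x + s * sqrt 2 * x ^ 2 - s * (sqrt 2 / 2) * y ^ 2 + x ^ 3 + 4 * x * y ^ 2
  + s * 2 * sqrt 2 * x ^ 2 * y ^ 2 + s * (sqrt 2 / 4) * x ^ 4.
Definition p1_1 (s x : R) : R := -1 + 3 * x ^ 2 + s * sqrt 2 * x ^ 3.
Definition dp1_1 (s x : R) : R := 6 * x + 3 * s * sqrt 2 * x ^ 2.
Definition q0_1 (s x : R) : R := x + s * sqrt 2 * x ^ 2 + x ^ 3 + s * (sqrt 2 / 4) * x ^ 4.
Definition q2_1 (s x : R) : R := - s * (sqrt 2 / 2) + 4 * x + s * 2 * sqrt 2 * x ^ 2.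
Definition h1 (s u : R) : R := - s * u / sqrt (2 + 9 * u ^ 2).

Definition P2 (x y : R) : R := - y + x ^ 3 * y.
Definition Q2 (x y : R) : R := x + / 2 * x ^ 2 * y ^ 2 - / 2 * x ^ 4.
Definition p1_2 (x : R) : R := -1 + x ^ 3.
Definition dp1_2 (x : R) : R := 3 * x ^ 2.
Definition q0_2 (x : R) : R := x - / 2 * x ^ 4.
Definition q2_2 (x : R) : R := / 2 * x ^ 2.
Definition h2 (u : R) : R := u ^ 3 / sqrt (4 + u ^ 6).

(* Main.v *)
From Stdlib Require Import Reals Ranalysis5 Lra Lia Nsatz ZArith Arith FunctionalExtensionality ClassicalEpsilon.
Require Import Defs.
Open Scope R_scope.

Lemma Dext (f : R -> R) x l l' : derivable_pt_lim f x l -> l = l' -> derivable_pt_lim f x l'.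
Proof. intros H ->; exact H. Qed.
Lemma Dfext (f g : R -> R) x l : (forall y, f y = g y) -> derivable_pt_lim g x l -> derivable_pt_lim f x l.
Proof. intros H H'. replace f with g; [exact H'|]. extensionality y; auto. Qed.
Lemma Dconst (c x : R) : derivable_pt_lim (fun _ => c) x 0.
Proof. exact (derivable_pt_lim_const c x). Qed.
Lemma Did (x : R) : derivable_pt_lim (fun y => y) x 1.
Proof. exact (derivable_pt_lim_id x). Qed.
Lemma Dplus (f g : R -> R) x a b : derivable_pt_lim f x a -> derivable_pt_lim g x b ->
  derivable_pt_lim (fun y => f y + g y) x (a + b).
Proof. intros; exact (derivable_pt_lim_plus f g x a b H H0). Qed.
Lemma Dminus (f g : R -> R) x a b : derivable_pt_lim f x a -> derivable_pt_lim g x b ->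
  derivable_pt_lim (fun y => f y - g y) x (a - b).
Proof. intros; exact (derivable_pt_lim_minus f g x a b H H0). Qed.
Lemma Dmult (f g : R -> R) x a b : derivable_pt_lim f x a -> derivable_pt_lim g x b ->
  derivable_pt_lim (fun y => f y * g y) x (a * g x + f x * b).
Proof. intros; exact (derivable_pt_lim_mult f g x a b H H0). Qed.
Lemma Dopp (f : R -> R) x a : derivable_pt_lim f x a ->
  derivable_pt_lim (fun y => - f y) x (- a).
Proof. intros; exact (derivable_pt_lim_opp f x a H). Qed.
Lemma Dcomp (f F : R -> R) x a b : derivable_pt_lim f x a -> derivable_pt_lim F (f x) b ->
  derivable_pt_lim (fun y => F (f y)) x (b * a).
Proof. intros; exact (derivable_pt_lim_comp f F x a b H H0). Qed.
Lemma Dpow (f : R -> R) (n : nat) x a : derivable_pt_lim f x a ->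
  derivable_pt_lim (fun y => f y ^ n) x (INR n * f x ^ Nat.pred n * a).
Proof. intros. apply (Dcomp f (fun y => y ^ n)); auto. apply derivable_pt_lim_pow. Qed.
Lemma Dinv (f : R -> R) x a : derivable_pt_lim f x a -> f x <> 0 ->
  derivable_pt_lim (fun y => / f y) x (- a / (f x ^ 2)).
Proof. intros H Hn.
  apply Dfext with (g := fun y => 1 / f y). { intros; unfold Rdiv; ring. }
  eapply Dext. apply (derivable_pt_lim_div (fun _ => 1) f x 0 a); auto. apply Dconst.
  unfold Rsqr; field; auto. Qed.
Lemma Ddiv (f g : R -> R) x a b : derivable_pt_lim f x a -> derivable_pt_lim g x b -> g x <> 0 ->
  derivable_pt_lim (fun y => f y / g y) x ((a * g x - b * f x) / (g x ^ 2)).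
Proof. intros. eapply Dext. apply (derivable_pt_lim_div f g x a b); auto. unfold Rsqr; simpl; f_equal; ring. Qed.
Lemma Dsqrt (f : R -> R) x a : derivable_pt_lim f x a -> 0 < f x ->
  derivable_pt_lim (fun y => sqrt (f y)) x (a / (2 * sqrt (f x))).
Proof. intros. eapply Dext. apply (Dcomp f sqrt). exact H. apply derivable_pt_lim_sqrt; exact H0. unfold Rdiv; ring. Qed.
Lemma Dexp (f : R -> R) x a : derivable_pt_lim f x a ->
  derivable_pt_lim (fun y => exp (f y)) x (exp (f x) * a).
Proof. intros. apply (Dcomp f exp); auto. apply derivable_pt_lim_exp. Qed.
Lemma Dln (f : R -> R) x a : derivable_pt_lim f x a -> 0 < f x ->
  derivable_pt_lim (fun y => ln (f y)) x (a / f x).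
Proof. intros. eapply Dext. apply (Dcomp f ln). exact H. apply derivable_pt_lim_ln; exact H0. unfold Rdiv; ring. Qed.
Lemma Dcos (f : R -> R) x a : derivable_pt_lim f x a ->
  derivable_pt_lim (fun y => cos (f y)) x (- sin (f x) * a).
Proof. intros. apply (Dcomp f cos); auto. apply derivable_pt_lim_cos. Qed.
Lemma Dsin (f : R -> R) x a : derivable_pt_lim f x a ->
  derivable_pt_lim (fun y => sin (f y)) x (cos (f x) * a).
Proof. intros. apply (Dcomp f sin); auto. apply derivable_pt_lim_sin. Qed.
Lemma Datan (f : R -> R) x a : derivable_pt_lim f x a ->
  derivable_pt_lim (fun y => atan (f y)) x (/ (1 + f x ^ 2) * a).
Proof. intros. apply (Dcomp f atan); auto. apply derivable_pt_lim_atan. Qed.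

Ltac dstep :=
  match goal with
  | |- derivable_pt_lim (fun y => y) _ _ => apply Did
  | |- derivable_pt_lim (fun _ => ?c) _ _ => apply Dconst
  | |- derivable_pt_lim (fun y => @?f y + @?g y) _ _ => apply (Dplus f g)
  | |- derivable_pt_lim (fun y => @?f y - @?g y) _ _ => apply (Dminus f g)
  | |- derivable_pt_lim (fun y => @?f y * @?g y) _ _ => apply (Dmult f g)
  | |- derivable_pt_lim (fun y => @?f y / @?g y) _ _ => apply (Ddiv f g)
  | |- derivable_pt_lim (fun y => - @?f y) _ _ => apply (Dopp f)
  | |- derivable_pt_lim (fun y => / @?f y) _ _ => apply (Dinv f)
  | |- derivable_pt_lim (fun y => @?f y ^ ?n) _ _ => apply (Dpow f n)
  | |- derivable_pt_lim (fun y => sqrt (@?f y)) _ _ => apply (Dsqrt f)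
  | |- derivable_pt_lim (fun y => exp (@?f y)) _ _ => apply (Dexp f)
  | |- derivable_pt_lim (fun y => ln (@?f y)) _ _ => apply (Dln f)
  | |- derivable_pt_lim (fun y => cos (@?f y)) _ _ => apply (Dcos f)
  | |- derivable_pt_lim (fun y => sin (@?f y)) _ _ => apply (Dsin f)
  | |- derivable_pt_lim (fun y => atan (@?f y)) _ _ => apply (Datan f)
  end.
Ltac dauto := repeat (dstep; cbv beta).


Lemma Dcont (f : R -> R) x l : derivable_pt_lim f x l -> continuity_pt f x.
Proof. intros H. apply derivable_continuous_pt. exists l. exact H. Qed.
Lemma Cconst c x : continuity_pt (fun _ : R => c) x.
Proof. apply (Dcont _ _ _ (Dconst c x)). Qed.
Lemma Cid x : continuity_pt (fun y : R => y) x.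
Proof. apply (Dcont _ _ _ (Did x)). Qed.
Lemma Cplus (f g : R -> R) x : continuity_pt f x -> continuity_pt g x -> continuity_pt (fun y => f y + g y) x.
Proof. intros; apply (continuity_pt_plus f g); auto. Qed.
Lemma Cminus (f g : R -> R) x : continuity_pt f x -> continuity_pt g x -> continuity_pt (fun y => f y - g y) x.
Proof. intros; apply (continuity_pt_minus f g); auto. Qed.
Lemma Cmult (f g : R -> R) x : continuity_pt f x -> continuity_pt g x -> continuity_pt (fun y => f y * g y) x.
Proof. intros; apply (continuity_pt_mult f g); auto. Qed.
Lemma Cdiv (f g : R -> R) x : continuity_pt f x -> continuity_pt g x -> g x <> 0 -> continuity_pt (fun y => f y / g y) x.
Proof. intros; apply (continuity_pt_div f g); auto. Qed.
Lemma Copp (f : R -> R) x : continuity_pt f x -> continuity_pt (fun y => - f y) x.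
Proof. intros; apply (continuity_pt_opp f); auto. Qed.
Lemma Ccomp (f F : R -> R) x : continuity_pt f x -> continuity_pt F (f x) -> continuity_pt (fun y => F (f y)) x.
Proof. intros; apply (continuity_pt_comp f F); auto. Qed.
Lemma Ccos x : continuity_pt cos x.
Proof. apply (Dcont _ _ _ (derivable_pt_lim_cos x)). Qed.
Lemma Csin x : continuity_pt sin x.
Proof. apply (Dcont _ _ _ (derivable_pt_lim_sin x)). Qed.
Lemma Catan x : continuity_pt atan x.
Proof. apply (Dcont _ _ _ (derivable_pt_lim_atan x)). Qed.
Lemma Cpow (f : R -> R) n x : continuity_pt f x -> continuity_pt (fun y => f y ^ n) x.
Proof. intros. apply (Ccomp f (fun y => y ^ n)); auto. apply (Dcont _ _ _ (derivable_pt_lim_pow _ n)). Qed.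
Lemma Csqrt (f : R -> R) x : continuity_pt f x -> 0 < f x -> continuity_pt (fun y => sqrt (f y)) x.
Proof. intros. apply (Ccomp f sqrt); auto. apply (Dcont _ _ _ (derivable_pt_lim_sqrt _ H0)). Qed.

Ltac cstep :=
  match goal with
  | |- continuity_pt (fun y => y) _ => apply Cid
  | |- continuity_pt (fun _ => ?c) _ => apply Cconst
  | |- continuity_pt (fun y => @?f y + @?g y) _ => apply (Cplus f g)
  | |- continuity_pt (fun y => @?f y - @?g y) _ => apply (Cminus f g)
  | |- continuity_pt (fun y => @?f y * @?g y) _ => apply (Cmult f g)
  | |- continuity_pt (fun y => @?f y / @?g y) _ => apply (Cdiv f g)
  | |- continuity_pt (fun y => - @?f y) _ => apply (Copp f)
  | |- continuity_pt (fun y => @?f y ^ ?n) _ => apply (Cpow f n)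
  | |- continuity_pt (fun y => sqrt (@?f y)) _ => apply (Csqrt f)
  | |- continuity_pt (fun y => cos (@?f y)) _ => apply (Ccomp f cos); [|apply Ccos]
  | |- continuity_pt (fun y => sin (@?f y)) _ => apply (Ccomp f sin); [|apply Csin]
  | |- continuity_pt (fun y => atan (@?f y)) _ => apply (Ccomp f atan); [|apply Catan]
  end.
Ltac cauto := repeat (cstep; cbv beta).
Lemma Rabs_le_inv x a : Rabs x <= a -> - a <= x <= a.
Proof. unfold Rabs; destruct (Rcase_abs x); intros; lra. Qed.

Ltac clear_noneq :=
  repeat match goal with
  | H : ?P |- _ =>
      match type of P with
      | Prop => lazymatch P with
                | @eq R _ _ => fail
                | _ => clear H
                end
      end
  end.
Ltac nsatz_clean := clear_noneq; cbn [pow] in *; nsatz.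

Lemma deriv_const_eq (f : R -> R) : (forall x, derivable_pt_lim f x 0) -> forall a b, f a = f b.
Proof.
  intros H a b. destruct (Rtotal_order a b) as [h|[h|h]].
  - destruct (MVT_cor2 f (fun _ => 0) a b h) as [c [Hc _]]; [intros; apply H|]. lra.
  - subst; reflexivity.
  - destruct (MVT_cor2 f (fun _ => 0) b a h) as [c [Hc _]]; [intros; apply H|]. lra.
Qed.

Lemma deriv_const_eq_interv (f : R -> R) lo hi :
  (forall x, lo <= x <= hi -> derivable_pt_lim f x 0) -> forall a b, lo <= a <= hi -> lo <= b <= hi -> f a = f b.
Proof.
  intros H a b Ha Hb. destruct (Rtotal_order a b) as [h|[h|h]].
  - destruct (MVT_cor2 f (fun _ => 0) a b h) as [c [Hc _]]; [intros; apply H; lra|]. lra.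
  - subst; reflexivity.
  - destruct (MVT_cor2 f (fun _ => 0) b a h) as [c [Hc _]]; [intros; apply H; lra|]. lra.
Qed.

Lemma deriv_local (f g : R -> R) x d l : 0 < d -> (forall y, Rabs (y - x) < d -> f y = g y) ->
  derivable_pt_lim g x l -> derivable_pt_lim f x l.
Proof.
  intros Hd Heq Hg eps Heps. destruct (Hg eps Heps) as [del Hdel].
  assert (Hm : 0 < Rmin del d) by (apply Rmin_pos; [apply cond_pos| lra]).
  exists (mkposreal _ Hm). intros h Hh Hlt. simpl in Hlt.
  rewrite (Heq (x + h)), (Heq x).
  - apply Hdel; auto. apply Rlt_le_trans with (1 := Hlt); apply Rmin_l.
  - replace (x - x) with 0 by ring; rewrite Rabs_R0; lra.
  - replace (x + h - x) with h by ring. apply Rlt_le_trans with (1 := Hlt); apply Rmin_r.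
Qed.

Section Anti.
Variable k : R -> R.
Hypothesis Hk : forall x, continuity_pt k x.

Let hn (n : nat) : - INR n <= INR n.
Proof. pose proof (pos_INR n); lra. Qed.
Let Cn (n : nat) : forall x, - INR n <= x <= INR n -> continuity_pt k x := fun x _ => Hk x.
Let Pn (n : nat) := primitive (hn n) (FTC_P1 (hn n) (Cn n)).

Let Pn_der n x : - INR n <= x <= INR n -> derivable_pt_lim (Pn n) x (k x).
Proof. intros; apply RiemannInt_P28; auto. Qed.

Let Pn_agree n m x : - INR n <= x <= INR n -> - INR m <= x <= INR m ->
  Pn m x - Pn m 0 = Pn n x - Pn n 0.
Proof.
  intros Hn Hm.
  set (lo := Rmax (- INR n) (- INR m)). set (hi := Rmin (INR n) (INR m)).
  assert (H := deriv_const_eq_interv (fun y => Pn m y - Pn n y) lo hi).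
  assert (lo <= x <= hi) by (unfold lo, hi; split; [apply Rmax_lub|apply Rmin_glb]; lra).
  assert (lo <= 0 <= hi) by (pose proof (pos_INR n); pose proof (pos_INR m); unfold lo, hi; split; [apply Rmax_lub|apply Rmin_glb]; lra).
  assert (Hd: forall y, lo <= y <= hi -> derivable_pt_lim (fun y => Pn m y - Pn n y) y 0).
  { intros y Hy. replace 0 with (k y - k y) by ring. apply Dminus.
    - apply Pn_der. unfold lo, hi in Hy. destruct Hy as [Hy1 Hy2].
      pose proof (Rmax_r (- INR n) (- INR m)); pose proof (Rmin_r (INR n) (INR m)); lra.
    - apply Pn_der. unfold lo, hi in Hy. destruct Hy as [Hy1 Hy2].
      pose proof (Rmax_l (- INR n) (- INR m)); pose proof (Rmin_l (INR n) (INR m)); lra. }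
  specialize (H Hd x 0). simpl in H. assert (Hx := H ltac:(assumption) ltac:(assumption)). lra.
Qed.

Let Nof (x : R) : nat := S (Z.to_nat (up (Rabs x))).

Let Nof_spec x : Rabs x + 1 < INR (Nof x).
Proof.
  unfold Nof. destruct (archimed (Rabs x)) as [H1 H2].
  assert (Hz : (0 <= up (Rabs x))%Z).
  { apply le_IZR. pose proof (Rabs_pos x). lra. }
  rewrite S_INR, INR_IZR_INZ, Z2Nat.id by exact Hz. lra.
Qed.

Lemma antideriv_exists : exists G : R -> R, G 0 = 0 /\ forall x, derivable_pt_lim G x (k x).
Proof.
  exists (fun x => Pn (Nof x) x - Pn (Nof x) 0). split.
  - ring.
  - intros x. pose proof (Nof_spec x) as Hm. set (m := Nof x) in *. clearbody m.
    apply deriv_local with (g := fun y => Pn m y - Pn m 0) (d := 1); [lra| |].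
    + intros y Hy. symmetry. apply Pn_agree.
      * pose proof (Nof_spec y) as Hy2. revert Hy2 Hy; split_Rabs; lra.
      * revert Hm Hy; split_Rabs; lra.
    + replace (k x) with (k x - 0) by ring. apply Dminus; [|apply Dconst].
      apply Pn_der. revert Hm; split_Rabs; lra.
Qed.
End Anti.

Section Inv.
Variables (Th k : R -> R) (m : R).
Hypothesis Hm : 0 < m.
Hypothesis HTh : forall x, derivable_pt_lim Th x (k x).
Hypothesis Hk : forall x, m <= k x.

Lemma Th_cont x : continuity_pt Th x.
Proof. apply derivable_continuous_pt. exists (k x). apply HTh. Qed.

Lemma Th_lower a b : a <= b -> m * (b - a) <= Th b - Th a.
Proof.
  intros [h|h].
  - destruct (MVT_cor2 Th k a b h) as [c [Hc _]]; [intros; apply HTh|].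
    rewrite Hc. apply Rmult_le_compat_r; [lra|apply Hk].
  - subst; lra.
Qed.

Lemma Th_abs a b : m * Rabs (b - a) <= Rabs (Th b - Th a).
Proof.
  destruct (Rle_dec a b) as [h|h].
  - pose proof (Th_lower a b h). rewrite !Rabs_right; nra.
  - assert (b <= a) by lra. pose proof (Th_lower b a H).
    rewrite !Rabs_left1; nra.
Qed.

Lemma Th_inj a b : Th a = Th b -> a = b.
Proof. intros H. pose proof (Th_abs a b). rewrite H, Rminus_diag, Rabs_R0 in H0.
  pose proof (Rabs_pos (b - a)). assert (Rabs (b - a) = 0) by nra.
  revert H2; split_Rabs; lra. Qed.

Lemma Th_surj t : exists p, Th p = t.
Proof.
  set (A := Rabs (t - Th 0) / m + 1).
  assert (HA : 1 <= A). { unfold A. pose proof (Rabs_pos (t - Th 0)). assert (0 <= Rabs (t - Th 0) / m) by (apply Rmult_le_pos; [lra| left; apply Rinv_0_lt_compat; lra]). lra. }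
  assert (H1 : Th A - Th 0 >= m * A). { pose proof (Th_lower 0 A ltac:(lra)). lra. }
  assert (H2 : Th 0 - Th (- A) >= m * A). { pose proof (Th_lower (-A) 0 ltac:(lra)). lra. }
  assert (HmA : m * A = Rabs (t - Th 0) + m). { unfold A. field. lra. }
  destruct (IVT_interv (fun y => Th y - t) (-A) A) as [z [Hz Hz2]].
  - intros. apply continuity_pt_minus; [apply Th_cont| apply continuity_pt_const; intros ? ?; auto].
  - lra.
  - revert H2. rewrite HmA. split_Rabs; lra.
  - revert H1. rewrite HmA. split_Rabs; lra.
  - exists z. simpl in Hz2. lra.
Qed.

Lemma inverse_exists : exists Ph : R -> R,
  (forall t, Th (Ph t) = t) /\ (forall p, Ph (Th p) = p) /\
  (forall t, derivable_pt_lim Ph t (/ k (Ph t))).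
Proof.
  destruct (choice (fun t p => Th p = t) Th_surj) as [Ph HPh].
  assert (HPh2 : forall p, Ph (Th p) = p) by (intros; apply Th_inj; rewrite HPh; auto).
  exists Ph. split; [auto| split; [auto|]].
  intros t eps Heps. set (p := Ph t). set (kp := k p).
  assert (Hkp : m <= kp) by apply Hk.
  set (e' := Rmin (m / 2) (eps * m * m / 2)).
  assert (He' : 0 < e') by (apply Rmin_pos; [lra| unfold Rdiv; repeat apply Rmult_lt_0_compat; try lra; apply Rinv_0_lt_compat; lra]).

  destruct (HTh p e' He') as [d Hd].
  assert (Hdpos : 0 < m * d) by (apply Rmult_lt_0_compat; [lra| apply cond_pos]).
  exists (mkposreal _ Hdpos). intros h Hh0 Hhd. simpl in Hhd.
  set (hh := Ph (t + h) - p).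
  assert (Hthh : Th (p + hh) = t + h) by (unfold hh; replace (p + (Ph (t+h) - p)) with (Ph (t+h)) by ring; apply HPh).
  assert (Htp : Th p = t) by (unfold p; apply HPh).
  assert (Hbound : m * Rabs hh <= Rabs h).
  { pose proof (Th_abs p (p + hh)). replace (p + hh - p) with hh in H by ring.
    rewrite Hthh, Htp in H. replace (t + h - t) with h in H by ring. exact H. }
  assert (Hhh0 : hh <> 0).
  { intro E. rewrite E, Rplus_0_r, Htp in Hthh. apply Hh0. lra. }
  assert (Hhhd : Rabs hh < d).
  { apply Rmult_lt_reg_l with m; [lra|]. lra. }
  specialize (Hd hh Hhh0 Hhhd). rewrite Hthh, Htp in Hd.
  replace (t + h - t) with h in Hd by ring.
  replace ((Ph (t + h) - Ph t) / h) with (hh / h) by (unfold hh, p; reflexivity).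
  set (q := h / hh) in *.
  assert (Hq1 : Rabs (q - kp) < m / 2) by (apply Rlt_le_trans with (1 := Hd); apply Rmin_l).
  assert (Hq2 : Rabs (q - kp) < eps * m * m / 2) by (apply Rlt_le_trans with (1 := Hd); apply Rmin_r).
  assert (Hqpos : m / 2 < q) by (revert Hq1; split_Rabs; lra).
  assert (Hhq : hh / h = / q) by (unfold q; field; auto).
  rewrite Hhq.
  replace (/ q - / kp) with ((kp - q) / (q * kp)) by (field; lra).
  unfold Rdiv. rewrite Rabs_mult, Rabs_inv, (Rabs_right (q * kp)) by nra.
  rewrite <- Rabs_Ropp. replace (- (kp - q)) with (q - kp) by ring.
  apply Rmult_lt_reg_r with (q * kp); [nra|].
  rewrite Rmult_assoc, Rinv_l by nra. rewrite Rmult_1_r.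
  apply Rlt_le_trans with (1 := Hq2).
  assert (m * m / 2 <= q * kp) by nra. nra.
Qed.
End Inv.

Lemma periodic_anti (hh H : R -> R) (rho : R) :
  (forall u, hh (- u) = - hh u) -> H 0 = 0 ->
  (forall p, derivable_pt_lim H p (hh (rho * cos p))) ->
  forall p, H (p + 2 * PI) = H p.
Proof.
  intros Hodd H0 HH.
  assert (Hneg : forall p, H (- p) = - H p).
  { intros p. assert (E := deriv_const_eq (fun q => H q + H (- q))).
    assert (E2 : forall x, derivable_pt_lim (fun q => H q + H (- q)) x 0).
    { intros x. eapply Dext. apply Dplus. apply HH. apply (Dcomp (fun q => - q) H).
      apply Dopp, Did. apply HH. rewrite cos_neg. ring. }
    specialize (E E2 p 0). simpl in E. rewrite Ropp_0, H0 in E. lra. }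
  assert (Hsym : forall p, H (PI - p) = H p).
  { intros p. assert (E := deriv_const_eq (fun q => H q - H (PI - q))).
    assert (E2 : forall x, derivable_pt_lim (fun q => H q - H (PI - q)) x 0).
    { intros x. eapply Dext. apply Dminus. apply HH. apply (Dcomp (fun q => PI - q) H).
      apply Dminus; [apply Dconst| apply Did]. apply HH.
      rewrite Rtrigo_facts.cos_pi_minus. replace (rho * - cos x) with (- (rho * cos x)) by ring.
      rewrite Hodd. ring. }
    specialize (E E2 p (PI/2)). simpl in E. replace (PI - PI/2) with (PI/2) in E by field. lra. }
  intros p.
  rewrite <- (Hsym (p + 2 * PI)). replace (PI - (p + 2 * PI)) with (- (PI + p)) by ring.
  rewrite Hneg. replace (PI + p) with (PI - - p) by ring. rewrite Hsym, Hneg. ring.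
Qed.

Lemma angle_exists c s : c ^ 2 + s ^ 2 = 1 -> exists p, cos p = c /\ sin p = s.
Proof.
  intros H. assert (Hc : -1 <= c <= 1) by nra.
  assert (Hs : sqrt (1 - c²) = Rabs s).
  { rewrite <- sqrt_Rsqr_abs. f_equal. unfold Rsqr. lra. }
  destruct (Rle_dec 0 s) as [h|h].
  - exists (acos c). rewrite cos_acos, sin_acos by auto. rewrite Hs, Rabs_right; lra.
  - exists (- acos c). rewrite cos_neg, sin_neg, cos_acos, sin_acos by auto.
    rewrite Hs, Rabs_left; lra.
Qed.

Lemma cos_sin_period a d : 0 < d < 2 * PI -> cos (a + d) = cos a -> sin (a + d) = sin a -> False.
Proof.
  intros Hd Hc Hs.
  assert (E : cos d = 1).
  { replace d with ((a + d) - a) by ring. rewrite cos_minus, Hc, Hs.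
    rewrite <- (sin2_cos2 a). unfold Rsqr; ring. }
  replace d with (2 * (d / 2)) in E by field. rewrite cos_2a_sin in E.
  assert (0 < sin (d / 2)) by (apply sin_gt_0; lra). nra.
Qed.

Lemma lift_identity x y p : 0 < x * cos p + y * sin p ->
  let th := p + atan ((y * cos p - x * sin p) / (x * cos p + y * sin p)) in
  x = sqrt (x ^ 2 + y ^ 2) * cos th /\ y = sqrt (x ^ 2 + y ^ 2) * sin th.
Proof.
  intros HD th. set (D := x * cos p + y * sin p) in *. set (N := y * cos p - x * sin p).
  pose proof (sin2_cos2 p) as Hp. unfold Rsqr in Hp.
  assert (E0 : D * D + N * N = x ^ 2 + y ^ 2).
  { transitivity ((x ^ 2 + y ^ 2) * (sin p * sin p + cos p * cos p)); [unfold D, N; ring| rewrite Hp; ring]. }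
  assert (E1 : 1 + (N / D)² = (x ^ 2 + y ^ 2) / (D * D)).
  { rewrite <- E0. unfold Rsqr. field. lra. }
  assert (E2 : sqrt (1 + (N / D)²) = sqrt (x ^ 2 + y ^ 2) / D).
  { rewrite E1, sqrt_div_alt by nra. rewrite sqrt_square by lra. reflexivity. }
  assert (Hr : 0 < sqrt (x ^ 2 + y ^ 2)).
  { apply sqrt_lt_R0. rewrite <- E0. nra. }
  unfold th. fold N D. rewrite cos_plus, sin_plus, cos_atan, sin_atan, E2. split.
  - transitivity (cos p * D - sin p * N).
    + unfold N, D. transitivity (x * (sin p * sin p + cos p * cos p)); [rewrite Hp; ring| ring].
    + field. lra.
  - transitivity (sin p * D + cos p * N).
    + unfold N, D. transitivity (y * (sin p * sin p + cos p * cos p)); [rewrite Hp; ring| ring].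
    + field. lra.
Qed.

Section Center.
Variables (P Q : R -> R -> R) (p1 q0 q2 hh X K : R -> R) (R0 kap : R).
Hypothesis HP : forall x y, P x y = p1 x * y.
Hypothesis HQ : forall x y, Q x y = q0 x + q2 x * y ^ 2.
Hypothesis HR0 : 0 < R0.
Hypothesis Hkap : 0 < kap.
Hypothesis Hodd : forall u, hh (- u) = - hh u.
Hypothesis Hcont : forall u, continuity_pt hh u.
Hypothesis Hhb : forall u, Rabs u <= R0 -> / 2 <= 1 + hh u.
Hypothesis HX0 : X 0 = 0.
Hypothesis HXd : forall u, derivable_pt_lim X u ((1 + hh u) * p1 (X u) * K u).
Hypothesis HKd : forall u, derivable_pt_lim K u ((1 + hh u) * q2 (X u) * K u ^ 2).
Hypothesis Hq0 : forall u, - u * K u = (1 + hh u) * q0 (X u).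
Hypothesis Hp1 : forall u, Rabs u <= R0 -> p1 (X u) < 0.
Hypothesis HK : forall u, Rabs u <= R0 -> K u <= - kap.

Lemma X_incr a b : - R0 <= a -> b <= R0 -> a < b -> X a < X b.
Proof.
  intros Ha Hb Hab.
  destruct (MVT_cor2 X (fun u => (1 + hh u) * p1 (X u) * K u) a b Hab) as [c [Hc Hc2]].
  { intros; apply HXd. }
  assert (Hcr : Rabs c <= R0) by (apply Rabs_le; lra).
  pose proof (Hhb c Hcr). pose proof (Hp1 c Hcr). pose proof (HK c Hcr).
  assert (0 < (1 + hh c) * (p1 (X c) * K c)) by (apply Rmult_lt_0_compat; nra).
  rewrite Rmult_assoc in Hc. nra.
Qed.

Lemma X_inj a b : Rabs a <= R0 -> Rabs b <= R0 -> X a = X b -> a = b.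
Proof.
  intros Ha Hb E. apply Rabs_le_inv in Ha. apply Rabs_le_inv in Hb.
  destruct (Rtotal_order a b) as [h|[h|h]]; auto.
  - pose proof (X_incr a b ltac:(lra) ltac:(lra) h). lra.
  - pose proof (X_incr b a ltac:(lra) ltac:(lra) h). lra.
Qed.

Lemma X_sign u : Rabs u <= R0 -> 0 <= X u * u.
Proof.
  intros Hu. apply Rabs_le_inv in Hu. destruct (Rtotal_order u 0) as [h|[h|h]].
  - pose proof (X_incr u 0 ltac:(lra) ltac:(lra) h). nra.
  - subst. lra.
  - pose proof (X_incr 0 u ltac:(lra) ltac:(lra) h). nra.
Qed.

Section Orbit.
Variables (rho p0 : R).
Hypothesis Hrho : 0 < rho <= R0.

Let kf (p : R) := 1 + hh (rho * cos p).

Let kf_bound p : / 2 <= kf p.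
Proof. unfold kf. apply Hhb. rewrite Rabs_mult, (Rabs_right rho) by lra.
  pose proof (COS_bound p). assert (Rabs (cos p) <= 1) by (apply Rabs_le; lra). nra. Qed.

Let kf_cont p : continuity_pt kf p.
Proof. unfold kf. apply (Cplus (fun _ => 1) (fun p => hh (rho * cos p))); [apply Cconst|].
  apply (Ccomp (fun p => rho * cos p) hh); [| apply Hcont]. cauto. Qed.

Lemma orbit_exists : closed_orbit_through P Q (X (rho * cos p0)) (- rho * sin p0 * K (rho * cos p0)) (2 * PI).
Proof.
  destruct (antideriv_exists kf kf_cont) as [G [HG0 HGd]].
  assert (HGper : forall p, G (p + 2 * PI) = G p + 2 * PI).
  { intros p. assert (E := periodic_anti hh (fun q => G q - q) rho Hodd).
    simpl in E. rewrite HG0 in E. specialize (E ltac:(ring)).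
    assert (E2 : forall q, derivable_pt_lim (fun q => G q - q) q (hh (rho * cos q))).
    { intros q. eapply Dext. apply Dminus; [apply HGd| apply Did]. unfold kf; ring. }
    specialize (E E2 p). lra. }
  destruct (inverse_exists G kf (/ 2) ltac:(lra) HGd kf_bound) as [Ph [HPh1 [HPh2 HPhd]]].
  assert (Ph_incr : forall a b, a < b -> Ph a < Ph b).
  { intros a b hab. destruct (Rlt_le_dec (Ph a) (Ph b)) as [h|h]; auto.
    pose proof (Th_lower G kf (/2) HGd kf_bound _ _ h). rewrite !HPh1 in H. nra. }
  set (c0 := G p0).
  set (ps := fun t => Ph (t + c0)).
  assert (Hps0 : ps 0 = p0) by (unfold ps, c0; rewrite Rplus_0_l; apply HPh2).
  assert (Hpsd : forall t, derivable_pt_lim ps t (/ kf (ps t))).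
  { intros t. unfold ps. eapply Dext. apply (Dcomp (fun t => t + c0) Ph).
    apply Dplus; [apply Did| apply Dconst]. apply HPhd. ring. }
  assert (Hpsper : forall t, ps (t + 2 * PI) = ps t + 2 * PI).
  { intros t. unfold ps. rewrite <- (HPh2 (Ph (t + c0) + 2 * PI)). rewrite HGper, HPh1. f_equal; ring. }
  set (uf := fun t => rho * cos (ps t)).
  set (vf := fun t => - rho * sin (ps t)).
  set (xf := fun t => X (uf t)).
  set (yf := fun t => vf t * K (uf t)).
  assert (Hub : forall t, Rabs (uf t) <= R0).
  { intros t. unfold uf. rewrite Rabs_mult, (Rabs_right rho) by lra.
    pose proof (COS_bound (ps t)). assert (Rabs (cos (ps t)) <= 1) by (apply Rabs_le; lra). nra. }
  assert (Hkf : forall t, kf (ps t) = 1 + hh (uf t)) by reflexivity.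
  assert (Hkpos : forall t, 0 < kf (ps t)) by (intros; pose proof (kf_bound (ps t)); lra).
  assert (Hud : forall t, derivable_pt_lim uf t (vf t / kf (ps t))).
  { intros t. unfold uf, vf. eapply Dext. apply (Dmult (fun _ => rho) (fun t => cos (ps t))).
    apply Dconst. apply (Dcos ps). apply Hpsd. field. apply Rgt_not_eq, Hkpos. }
  assert (Hvd : forall t, derivable_pt_lim vf t (- uf t / kf (ps t))).
  { intros t. unfold uf, vf. eapply Dext. apply (Dmult (fun _ => - rho) (fun t => sin (ps t))).
    apply Dconst. apply (Dsin ps). apply Hpsd. field. apply Rgt_not_eq, Hkpos. }
  assert (Hxd : forall t, derivable_pt_lim xf t (P (xf t) (yf t))).
  { intros t. rewrite HP. unfold xf. eapply Dext. apply (Dcomp uf X). apply Hud. apply HXd.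
      unfold yf. rewrite <- Hkf. field. apply Rgt_not_eq, Hkpos. }
  assert (Hyd : forall t, derivable_pt_lim yf t (Q (xf t) (yf t))).
  { intros t. rewrite HQ. unfold yf. eapply Dext. apply (Dmult vf (fun t => K (uf t))). apply Hvd.
      apply (Dcomp uf K). apply Hud. apply HKd.
      unfold xf. rewrite <- Hkf. pose proof (Hq0 (uf t)) as E. rewrite <- Hkf in E.
      assert (Hk0 : kf (ps t) <> 0) by (apply Rgt_not_eq, Hkpos).
      replace (q0 (X (uf t))) with (- uf t * K (uf t) / kf (ps t)) by (rewrite E; field; auto).
      field. auto. }
  exists xf, yf. split; [| split; [| split; [| split]]].
  - intros t; split; auto.
  - unfold xf, uf. rewrite Hps0. reflexivity.
  - unfold yf, vf, uf. rewrite Hps0. reflexivity.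
  -
    assert (Hcp : forall z, cos (z + 2 * PI) = cos z) by (intros; rewrite cos_plus, cos_2PI, sin_2PI; ring).
    assert (Hsp : forall z, sin (z + 2 * PI) = sin z) by (intros; rewrite sin_plus, cos_2PI, sin_2PI; ring).
    split; [pose proof PI_RGT_0; lra|]. split.
    + intros t. unfold xf, yf, vf, uf. rewrite Hpsper, Hcp, Hsp. auto.
    + intros s0 Hs0 E. injection E as E1 E2.
      assert (Eu : uf s0 = uf 0) by (apply X_inj; auto).
      unfold yf in E2. rewrite Eu in E2.
      assert (HK0 : K (uf 0) <> 0) by (pose proof (HK (uf 0) (Hub 0)); lra).
      assert (Ev : vf s0 = vf 0) by (apply Rmult_eq_reg_r with (2 := HK0); auto).
      unfold uf in Eu. unfold vf in Ev.
      assert (Ec : cos (ps s0) = cos (ps 0)) by (apply Rmult_eq_reg_l with rho; lra).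
      assert (Es : sin (ps s0) = sin (ps 0)) by (apply Rmult_eq_reg_l with (- rho); lra).
      pose proof (Ph_incr (0 + c0) (s0 + c0) ltac:(lra)).
      pose proof (Ph_incr (s0 + c0) (2 * PI + c0) ltac:(lra)).
      pose proof (Hpsper 0). unfold ps in *. rewrite Rplus_0_l in H1.
      apply (cos_sin_period (Ph (0 + c0)) (Ph (s0 + c0) - Ph (0 + c0))).
      * rewrite Rplus_0_l in *. lra.
      * replace (Ph (0 + c0) + (Ph (s0 + c0) - Ph (0 + c0))) with (Ph (s0 + c0)) by ring. auto.
      * replace (Ph (0 + c0) + (Ph (s0 + c0) - Ph (0 + c0))) with (Ph (s0 + c0)) by ring. auto.
  -
    assert (Hcp : forall z, cos (z + 2 * PI) = cos z) by (intros; rewrite cos_plus, cos_2PI, sin_2PI; ring).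
    assert (Hsp : forall z, sin (z + 2 * PI) = sin z) by (intros; rewrite sin_plus, cos_2PI, sin_2PI; ring).
    assert (HD : forall t, 0 < xf t * cos (ps t) + yf t * sin (ps t)).
    { intros t. unfold xf, yf, vf.
      pose proof (X_sign (uf t) (Hub t)) as Hs. pose proof (HK (uf t) (Hub t)) as HKt.
      assert (Hc : cos (ps t) = uf t / rho) by (unfold uf; field; lra).
      rewrite Hc. pose proof (sin2_cos2 (ps t)) as Hsc. unfold Rsqr in Hsc.
      destruct (Req_dec (uf t) 0) as [h0|h0].
      - rewrite h0 in *. rewrite HX0. replace (0 * (0 / rho)) with 0 by (unfold Rdiv; ring).
        assert (cos (ps t) = 0) by (rewrite Hc; unfold Rdiv; ring).
        assert (Hs1 : sin (ps t) * sin (ps t) = 1) by nra.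
        replace (0 + - rho * sin (ps t) * K 0 * sin (ps t)) with (rho * (- K 0) * (sin (ps t) * sin (ps t))) by ring.
        rewrite Hs1. nra.
      - assert (X (uf t) <> 0).
        { intro E. rewrite <- HX0 in E. apply X_inj in E; auto. rewrite Rabs_R0; lra. }
        assert (0 < X (uf t) * uf t).
        { destruct Hs as [Hs|Hs]; auto. exfalso. symmetry in Hs. apply Rmult_integral in Hs as [Hs|Hs]; auto. }
        assert (0 < X (uf t) * (uf t / rho)) by (unfold Rdiv; rewrite <- Rmult_assoc; apply Rmult_lt_0_compat; [auto| apply Rinv_0_lt_compat; lra]).
        assert (0 <= - rho * sin (ps t) * K (uf t) * sin (ps t)).
        { replace (- rho * sin (ps t) * K (uf t) * sin (ps t)) with (rho * (- K (uf t)) * (sin (ps t) * sin (ps t))) by ring.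
          apply Rmult_le_pos; [apply Rmult_le_pos; lra| nra]. }
        lra. }
    split.
    + intros t E. injection E as E1 E2. specialize (HD t). rewrite E1, E2 in HD. lra.
    + set (th := fun t => ps t + atan ((yf t * cos (ps t) - xf t * sin (ps t)) / (xf t * cos (ps t) + yf t * sin (ps t)))).
      exists th. split; [| split].
      * intros t. unfold th. cauto.
        all: try apply (Dcont _ _ _ (Hpsd t)).
        all: try (apply Rgt_not_eq; apply HD).
        all: try apply (Dcont _ _ _ (Hxd t)).
        all: try apply (Dcont _ _ _ (Hyd t)).
      * intros t. apply (lift_identity (xf t) (yf t) (ps t) (HD t)).
      * assert (E : th (0 + 2 * PI) = th 0 + 2 * PI).
        { unfold th. unfold xf, yf, vf, uf. rewrite Hpsper, Hcp, Hsp. ring. }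
        rewrite Rplus_0_l in E. rewrite E. pose proof PI_RGT_0. lra.
Qed.
End Orbit.

Theorem generic_center : is_isochronous_center P Q.
Proof.
  set (r := R0 / 2).
  assert (Hr : 0 < r) by (unfold r; lra).
  assert (HXr : 0 < X r) by (rewrite <- HX0; apply X_incr; unfold r; lra).
  assert (HXmr : X (- r) < 0) by (rewrite <- HX0; apply X_incr; unfold r; lra).
  set (d := Rmin (Rmin (X r) (- X (- r))) (kap * r)).
  assert (Hd1 : d <= X r) by (unfold d; eapply Rle_trans; [apply Rmin_l| apply Rmin_l]).
  assert (Hd2 : d <= - X (- r)) by (unfold d; eapply Rle_trans; [apply Rmin_l| apply Rmin_r]).
  assert (Hd3 : d <= kap * r) by (unfold d; apply Rmin_r).
  assert (Hd : 0 < d) by (unfold d; repeat apply Rmin_pos; nra).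
  exists d, (2 * PI). split; [exact Hd|].
  intros a b Hab.
  assert (Ha : - d < a < d) by nra.
  assert (Hb : - d < b < d) by nra.
  destruct (IVT_interv (fun u => X u - a) (- r) r) as [u0 [Hu0 Hu0e]].
  { intros. apply continuity_pt_minus. apply (Dcont _ _ _ (HXd a0)). apply continuity_pt_const; intros ? ?; auto. }
  { lra. } { simpl. lra. } { simpl. lra. }
  simpl in Hu0e. assert (HXu0 : X u0 = a) by lra. clear Hu0e.
  assert (Hu0R : Rabs u0 <= R0) by (apply Rabs_le; unfold r in *; lra).
  pose proof (HK u0 Hu0R) as HKu0.
  set (v0 := b / K u0).
  assert (Hv0 : Rabs v0 <= r).
  { unfold v0. unfold Rdiv. rewrite Rabs_mult, Rabs_inv, (Rabs_left (K u0)) by lra.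
    apply Rmult_le_reg_r with (- K u0); [lra|]. rewrite Rmult_assoc, Rinv_l by lra.
    rewrite Rmult_1_r. assert (Rabs b < d) by (apply Rabs_def1; lra). nra. }
  assert (Hpos : 0 < u0 ^ 2 + v0 ^ 2).
  { destruct (Req_dec u0 0) as [h|h].
    - subst u0. rewrite HX0 in HXu0. subst a.
      assert (b <> 0) by (intro; subst; lra).
      assert (v0 <> 0) by (unfold v0; unfold Rdiv; apply Rmult_integral_contrapositive; split; auto; apply Rinv_neq_0_compat; lra).
      nra.
    - nra. }
  set (rho := sqrt (u0 ^ 2 + v0 ^ 2)).
  assert (Hrho2 : rho * rho = u0 ^ 2 + v0 ^ 2) by (apply sqrt_sqrt; lra).
  assert (Hrho0 : 0 < rho) by (apply sqrt_lt_R0; lra).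
  assert (HrhoR : rho <= R0).
  { apply Rabs_le_inv in Hv0. assert (u0 ^ 2 + v0 ^ 2 <= R0 * R0) by (unfold r in *; nra). nra. }
  destruct (angle_exists (u0 / rho) (- v0 / rho)) as [p0 [Hc Hs]].
  { field_simplify; [| lra]. rewrite <- Hrho2. field. lra. }
  assert (E1 : rho * cos p0 = u0) by (rewrite Hc; field; lra).
  assert (E2 : - rho * sin p0 = v0) by (rewrite Hs; field; lra).
  pose proof (orbit_exists rho p0 ltac:(lra)) as Ho.
  rewrite E1, E2, HXu0 in Ho. unfold v0 in Ho.
  replace (b / K u0 * K u0) with b in Ho by (field; lra). exact Ho.
Qed.
End Center.

Fixpoint bco (n : nat) : R :=
  match n with
  | O => 1
  | S k => - bco k * (2 * INR k + 1) / (2 * INR k + 2)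
  end.

Lemma bco_bound n : Rabs (bco n) <= 1.
Proof.
  induction n; simpl. rewrite Rabs_R1; lra.
  pose proof (pos_INR n).
  unfold Rdiv. rewrite !Rabs_mult, Rabs_Ropp, Rabs_inv.
  rewrite (Rabs_right (2 * INR n + 1)) by lra. rewrite (Rabs_right (2 * INR n + 2)) by lra.
  assert ((2 * INR n + 1) * / (2 * INR n + 2) <= 1).
  { apply Rmult_le_reg_r with (2 * INR n + 2); [lra|]. rewrite Rmult_assoc, Rinv_l by lra. lra. }
  assert (0 <= (2 * INR n + 1) * / (2 * INR n + 2)) by (apply Rmult_le_pos; [lra| left; apply Rinv_0_lt_compat; lra]).
  pose proof (Rabs_pos (bco n)). nra.
Qed.

Definition Sb (N : nat) (z : R) := sum_f_R0 (fun n => bco n * z ^ n) N.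
Definition Sd (N : nat) (z : R) := sum_f_R0 (fun n => INR n * bco n * z ^ Nat.pred n) N.

Lemma Sb_der N z : derivable_pt_lim (Sb N) z (Sd N z).
Proof.
  induction N.
  - unfold Sb, Sd; simpl. apply Dfext with (g := fun _ => 1); [intros; ring|]. eapply Dext; [apply Dconst| ring].
  - change (Sb (S N)) with (fun z => Sb N z + bco (S N) * z ^ S N).
    change (Sd (S N) z) with (Sd N z + INR (S N) * bco (S N) * z ^ Nat.pred (S N)).
    apply (Dplus (Sb N) (fun z => bco (S N) * z ^ S N)).
    + exact IHN.
    + eapply Dext. apply (Dmult (fun _ => bco (S N)) (fun z => z ^ S N)). apply Dconst. apply derivable_pt_lim_pow. ring.
Qed.

Lemma Sb_ode N z : 2 * (1 + z) * Sd N z + Sb N z = (2 * INR N + 1) * bco N * z ^ N.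
Proof.
  induction N.
  - unfold Sd, Sb; simpl. ring.
  - change (Sd (S N) z) with (Sd N z + INR (S N) * bco (S N) * z ^ N).
    change (Sb (S N) z) with (Sb N z + bco (S N) * z ^ S N).
    replace (2 * (1 + z) * (Sd N z + INR (S N) * bco (S N) * z ^ N) + (Sb N z + bco (S N) * z ^ S N))
      with ((2 * (1 + z) * Sd N z + Sb N z) + (2 * (1 + z) * INR (S N) * bco (S N) * z ^ N + bco (S N) * z ^ S N)) by ring.
    rewrite IHN.
    change (bco (S N)) with (- bco N * (2 * INR N + 1) / (2 * INR N + 2)).
    rewrite S_INR. pose proof (pos_INR N). simpl pow. field. lra.
Qed.

Lemma Sb_0 N : Sb N 0 = 1.
Proof. induction N; unfold Sb in *; simpl; [ring|]. rewrite IHN. ring. Qed.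

Lemma bser_conv z : Rabs z <= / 4 -> Pser bco z (/ sqrt (1 + z)).
Proof.
  intros Hz. apply Rabs_le_inv in Hz.
  assert (Hbnd : forall N, Rabs (Sb N z - / sqrt (1 + z)) <= 4 * (/ 2) ^ N).
  { intros N.
    set (W := fun t => Sb N t * sqrt (1 + t)).
    assert (HWd : forall c, Rmin 0 z <= c <= Rmax 0 z ->
       derivable_pt_lim W c ((2 * INR N + 1) * bco N * c ^ N / (2 * sqrt (1 + c)))).
    { intros c Hc. assert (-/4 <= c <= /4).
      { split. apply Rle_trans with (Rmin 0 z); [apply Rmin_glb; lra| lra].
        apply Rle_trans with (Rmax 0 z); [lra| apply Rmax_lub; lra]. }
      unfold W. eapply Dext. apply (Dmult (Sb N) (fun t => sqrt (1 + t))). apply Sb_der.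
      apply (Dsqrt (fun t => 1 + t)). apply (Dplus (fun _ => 1) (fun t => t)); [apply Dconst| apply Did]. lra.
      rewrite <- Sb_ode. assert (Hs : 0 < sqrt (1 + c)) by (apply sqrt_lt_R0; lra).
      assert (Hs2 : sqrt (1 + c) * sqrt (1 + c) = 1 + c) by (apply sqrt_sqrt; lra).
      set (s := sqrt (1 + c)) in *. rewrite <- Hs2. field. lra. }
    destruct (MVT_abs W _ 0 z HWd) as [c [Hc Hcr]].
    assert (Hc4 : -/4 <= c <= /4).
    { split. apply Rle_trans with (Rmin 0 z); [apply Rmin_glb; lra| lra].
      apply Rle_trans with (Rmax 0 z); [lra| apply Rmax_lub; lra]. }
    assert (HW0 : W 0 = 1) by (unfold W; rewrite Sb_0, Rplus_0_r, sqrt_1; ring).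
    rewrite HW0 in Hc.
    assert (Hsz : 0 < sqrt (1 + z)) by (apply sqrt_lt_R0; lra).
    assert (Hsz2 : / 2 <= sqrt (1 + z)).
    { rewrite <- (sqrt_Rsqr (/2)) by lra. apply sqrt_le_1_alt. unfold Rsqr. lra. }
    assert (Hsc2 : / 2 <= sqrt (1 + c)).
    { rewrite <- (sqrt_Rsqr (/2)) by lra. apply sqrt_le_1_alt. unfold Rsqr. lra. }
    assert (E : Sb N z - / sqrt (1 + z) = (W z - 1) / sqrt (1 + z)) by (unfold W; field; lra).
    rewrite E. unfold Rdiv. rewrite Rabs_mult, Rabs_inv, (Rabs_right (sqrt (1 + z))) by lra.
    rewrite Hc.
    assert (Hp : Rabs ((2 * INR N + 1) * bco N * c ^ N / (2 * sqrt (1 + c))) <= (2 * INR N + 1) * (/ 4) ^ N).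
    { unfold Rdiv. rewrite !Rabs_mult, Rabs_inv, <- RPow_abs.
      pose proof (pos_INR N). rewrite (Rabs_right (2 * INR N + 1)) by lra.
      rewrite (Rabs_right (2 * sqrt (1 + c))) by lra.
      pose proof (bco_bound N).
      assert (Rabs c ^ N <= (/4) ^ N) by (apply pow_incr; split; [apply Rabs_pos| apply Rabs_le; lra]).
      assert (/ (2 * sqrt (1 + c)) <= 1) by (apply Rmult_le_reg_l with (2 * sqrt (1 + c)); [lra|]; rewrite Rinv_r by lra; lra).
      assert (0 <= / (2 * sqrt (1 + c))) by (left; apply Rinv_0_lt_compat; lra).
      pose proof (pow_le (Rabs c) N (Rabs_pos c)).
      pose proof (Rabs_pos (bco N)).
      apply Rle_trans with ((2 * INR N + 1) * Rabs c ^ N).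
      - assert (Rabs (bco N) * / (2 * sqrt (1 + c)) <= 1) by nra.
        assert (0 <= Rabs (bco N) * / (2 * sqrt (1 + c))) by nra.
        assert (0 <= (2 * INR N + 1) * Rabs c ^ N) by nra.
        replace ((2 * INR N + 1) * Rabs (bco N) * Rabs c ^ N * / (2 * sqrt (1 + c)))
          with (((2 * INR N + 1) * Rabs c ^ N) * (Rabs (bco N) * / (2 * sqrt (1 + c)))) by ring.
        nra.
      - apply Rmult_le_compat_l; lra. }
    assert (Hpow : (2 * INR N + 1) * (/ 4) ^ N <= 2 * (/ 2) ^ N).
    { clear -N. induction N. simpl. lra. rewrite S_INR. simpl.
      assert (0 <= (/4) ^ N) by (apply pow_le; lra). assert (0 <= (/2)^N) by (apply pow_le; lra).
      assert ((/4)^N <= (/2)^N) by (apply pow_incr; lra). nra. }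
    assert (Hzl : Rabs (z - 0) <= 1) by (rewrite Rminus_0_r; apply Rabs_le; lra).
    assert (Hiv : / sqrt (1 + z) <= 2).
    { replace 2 with (/ / 2) by field. apply Rinv_le_contravar; lra. }
    assert (0 <= (/2) ^ N) by (apply pow_le; lra).
    apply Rle_trans with (Rabs ((2 * INR N + 1) * bco N * c ^ N / (2 * sqrt (1 + c))) * 1 * 2).
    - apply Rmult_le_compat; try apply Rabs_pos; try (left; apply Rinv_0_lt_compat; lra); auto.
      + apply Rmult_le_pos; apply Rabs_pos.
      + apply Rmult_le_compat_l; [apply Rabs_pos| auto].
    - nra. }
  intros eps Heps.
  destruct (pow_lt_1_zero (/ 2) ltac:(rewrite Rabs_right; lra) (eps / 4) ltac:(lra)) as [N0 HN0].
  exists N0. intros n Hn. unfold Rdist. specialize (HN0 n Hn). rewrite Rabs_right in HN0 by (apply Rle_ge, pow_le; lra).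
  pose proof (Hbnd n). unfold Sb in H. lra.
Qed.

Lemma pser_ext a b x l : (forall n, a n = b n) -> Pser a x l -> Pser b x l.
Proof. intros H. replace b with a; auto. extensionality n; auto. Qed.

Lemma pser_scale a c x l : Pser a x l -> Pser (fun n => c * a n) x (c * l).
Proof.
  intros H eps Heps. destruct (Req_dec c 0) as [h|h].
  - exists 0%nat. intros n _. subst c. unfold Rdist.
    replace (sum_f_R0 (fun n0 : nat => 0 * a n0 * x ^ n0) n) with 0.
    rewrite Rmult_0_l, Rminus_0_r, Rabs_R0; lra.
    induction n; simpl; [ring| rewrite <- IHn; ring].
  - assert (Hc : 0 < Rabs c) by (apply Rabs_pos_lt; auto).
    destruct (H (eps / Rabs c)) as [N HN]. { apply Rdiv_lt_0_compat; lra. }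
    exists N. intros n Hn. specialize (HN n Hn). unfold Rdist in *.
    replace (sum_f_R0 (fun n0 : nat => c * a n0 * x ^ n0) n) with (c * sum_f_R0 (fun n0 : nat => a n0 * x ^ n0) n).
    + rewrite <- Rmult_minus_distr_l, Rabs_mult.
      apply Rmult_lt_reg_l with (/ Rabs c). apply Rinv_0_lt_compat; lra.
      rewrite <- Rmult_assoc, Rinv_l by lra. unfold Rdiv in HN. lra.
    + clear. induction n; simpl; [ring| rewrite <- IHn; ring].
Qed.

Lemma pser_scalearg b al z l : Pser b (al * z) l -> Pser (fun n => b n * al ^ n) z l.
Proof.
  unfold Pser. intros H. replace (fun n => b n * al ^ n * z ^ n) with (fun n => b n * (al * z) ^ n); auto.
  extensionality n. rewrite Rpow_mult_distr. ring.
Qed.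

Definition shift (a : nat -> R) (n : nat) : R := match n with O => 0 | S k => a k end.

Lemma shift_sum a u n : sum_f_R0 (fun n0 => shift a n0 * u ^ n0) (S n) = u * sum_f_R0 (fun n0 => a n0 * u ^ n0) n.
Proof. induction n. simpl. ring. rewrite tech5, IHn, tech5. simpl. ring. Qed.

Lemma pser_shift a u l : Pser a u l -> Pser (shift a) u (u * l).
Proof.
  intros H eps Heps. destruct (Req_dec u 0) as [h|h].
  - subst u. exists 1%nat. intros n Hn. destruct n as [|n]; [lia|]. unfold Rdist. rewrite shift_sum.
    rewrite !Rmult_0_l, Rminus_0_r, Rabs_R0; lra.
  - assert (Hc : 0 < Rabs u) by (apply Rabs_pos_lt; auto).
    destruct (H (eps / Rabs u)) as [N HN]. { apply Rdiv_lt_0_compat; lra. }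
    exists (S N). intros n Hn. destruct n as [|n]; [lia|].
    assert (n >= N)%nat by lia. specialize (HN n H0). unfold Rdist in *.
    rewrite shift_sum.
    rewrite <- Rmult_minus_distr_l, Rabs_mult.
    apply Rmult_lt_reg_l with (/ Rabs u). apply Rinv_0_lt_compat; lra.
    rewrite <- Rmult_assoc, Rinv_l by lra. unfold Rdiv in HN. lra.
Qed.

Definition spread (b : nat -> R) (m : nat) (n : nat) : R :=
  if Nat.eqb (n mod m) 0 then b (n / m)%nat else 0.

Lemma div_step m N : (m <> 0)%nat ->
  ((S N) mod m = 0 /\ S N / m = S (N / m))%nat \/ ((S N) mod m <> 0 /\ S N / m = N / m)%nat.
Proof.
  intros Hm. pose proof (Nat.div_mod N m Hm) as E. pose proof (Nat.mod_upper_bound N m Hm) as B.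
  set (q := (N / m)%nat) in *. set (r := (N mod m)%nat) in *.
  destruct (Nat.eq_dec (S r) m) as [h|h].
  - left. split.
    + symmetry. apply (Nat.mod_unique (S N) m (S q) 0); lia.
    + symmetry. apply (Nat.div_unique (S N) m (S q) 0); lia.
  - right. split.
    + rewrite <- (Nat.mod_unique (S N) m q (S r)); lia.
    + symmetry. apply (Nat.div_unique (S N) m q (S r)); lia.
Qed.

Lemma spread_sum b m u N : (m <> 0)%nat ->
  sum_f_R0 (fun n => spread b m n * u ^ n) N = sum_f_R0 (fun j => b j * (u ^ m) ^ j) (N / m).
Proof.
  intros Hm. induction N.
  - rewrite Nat.Div0.div_0_l by auto. simpl. unfold spread. rewrite Nat.Div0.mod_0_l, Nat.Div0.div_0_l by auto. simpl. ring.
  - rewrite tech5, IHN. unfold spread.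
    destruct (div_step m N Hm) as [[h1 h2]|[h1 h2]].
    + rewrite h1, h2. simpl Nat.eqb. rewrite tech5. f_equal. f_equal.
      rewrite <- pow_mult. f_equal.
      pose proof (Nat.div_mod (S N) m Hm). rewrite h1, h2 in H. lia.
    + rewrite h2. destruct (Nat.eqb_spec (S N mod m) 0); [contradiction|]. ring.
Qed.

Lemma pser_spread b m u l : (m <> 0)%nat -> Pser b (u ^ m) l -> Pser (spread b m) u l.
Proof.
  intros Hm H eps Heps. destruct (H eps Heps) as [N HN].
  exists (N * m)%nat. intros n Hn. unfold Rdist. rewrite spread_sum by auto.
  apply HN. apply Nat.le_trans with ((N * m) / m)%nat.
  - rewrite Nat.div_mul; auto.
  - apply Nat.Div0.div_le_mono; auto.
Qed.

Lemma pser_eq a x l l' : Pser a x l -> l = l' -> Pser a x l'.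
Proof. intros H ->; exact H. Qed.

Lemma h2_analytic : analytic_near0 h2.
Proof.
  eexists. exists 1. split; [lra|]. intros u Hu.
  assert (Hu6 : Rabs (/ 4 * u ^ 6) <= / 4).
  { rewrite Rabs_mult, Rabs_right by lra. rewrite <- RPow_abs.
    assert (Rabs u ^ 6 <= 1) by (rewrite <- (pow1 6); apply pow_incr; split; [apply Rabs_pos| lra]).
    nra. }
  pose proof (bser_conv _ Hu6) as H.
  apply pser_scalearg in H. apply (pser_spread _ 6) in H; [|lia].
  apply pser_shift, pser_shift, pser_shift in H. apply (pser_scale _ (/ 2)) in H.
  eapply pser_eq. exact H.
  unfold h2. assert (0 <= u ^ 6) by (replace (u ^ 6) with ((u ^ 3) ^ 2) by ring; apply pow2_ge_0).
  replace (4 + u ^ 6) with (4 * (1 + / 4 * u ^ 6)) by field.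
  rewrite sqrt_mult by lra. replace (sqrt 4) with 2.
  2: { replace 4 with (2 * 2) by ring. rewrite sqrt_square; lra. }
  assert (0 < sqrt (1 + / 4 * u ^ 6)) by (apply sqrt_lt_R0; lra).
  field. lra.
Qed.

Lemma h1_analytic s : analytic_near0 (h1 s).
Proof.
  eexists. exists (/ 5). split; [lra|]. intros u Hu.
  assert (Hu2 : Rabs (9 / 2 * u ^ 2) <= / 4).
  { rewrite Rabs_mult, Rabs_right by lra. rewrite <- RPow_abs.
    assert (Rabs u ^ 2 <= / 25) by (simpl; pose proof (Rabs_pos u); nra). lra. }
  pose proof (bser_conv _ Hu2) as H.
  apply pser_scalearg in H. apply (pser_spread _ 2) in H; [|lia].
  apply pser_shift in H. apply (pser_scale _ (- s / sqrt 2)) in H.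
  eapply pser_eq. exact H.
  unfold h1. assert (0 <= u ^ 2) by apply pow2_ge_0.
  replace (2 + 9 * u ^ 2) with (2 * (1 + 9 / 2 * u ^ 2)) by field.
  rewrite sqrt_mult by lra.
  assert (0 < sqrt (1 + 9 / 2 * u ^ 2)) by (apply sqrt_lt_R0; lra).
  assert (0 < sqrt 2) by (apply sqrt_lt_R0; lra).
  field. lra.
Qed.

Lemma exp_pow_nat a n : exp (INR n * a) = exp a ^ n.
Proof. induction n. simpl. rewrite Rmult_0_l, exp_0; auto.
  rewrite S_INR, Rmult_plus_distr_r, Rmult_1_l, exp_plus, IHn. simpl. ring. Qed.

Definition Sq (u : R) := sqrt (u ^ 6 + 4).
Definition cc (u : R) := exp (ln ((Sq u - u ^ 3) / 2) / 3).
Definition X2 (u : R) := u * cc u.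
Definition K2 (u : R) := - cc u.

Lemma u6_nonneg u : 0 <= u ^ 6.
Proof. replace (u ^ 6) with ((u ^ 3) ^ 2) by ring; apply pow2_ge_0. Qed.
Lemma Sq_pos u : 0 < Sq u.
Proof. unfold Sq. apply sqrt_lt_R0. pose proof (u6_nonneg u); lra. Qed.
Lemma Sq_sq u : Sq u * Sq u = u ^ 6 + 4.
Proof. unfold Sq. apply sqrt_sqrt. pose proof (u6_nonneg u); lra. Qed.
Lemma L_pos u : 0 < (Sq u - u ^ 3) / 2.
Proof. pose proof (Sq_pos u). pose proof (Sq_sq u).
  assert (u ^ 3 < Sq u) by (destruct (Rle_dec (u^3) 0); [lra| nra]). lra. Qed.
Lemma cc_pos u : 0 < cc u.
Proof. unfold cc; apply exp_pos. Qed.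
Lemma cc_cube u : cc u ^ 3 = (Sq u - u ^ 3) / 2.
Proof. unfold cc. rewrite <- exp_pow_nat. simpl INR. replace ((1 + 1 + 1) * (ln ((Sq u - u ^ 3) / 2) / 3)) with (ln ((Sq u - u ^ 3) / 2)) by field.
  apply exp_ln, L_pos. Qed.

Lemma cc_der u : derivable_pt_lim cc u (- cc u * u ^ 2 / Sq u).
Proof.
  unfold cc. pose proof (L_pos u) as HL. pose proof (Sq_pos u) as HS. pose proof (Sq_sq u) as HS2.
  eapply Dext. apply (Dexp (fun u => ln ((Sq u - u ^ 3) / 2) / 3)).
  apply (Ddiv (fun u => ln ((Sq u - u ^ 3) / 2)) (fun _ => 3)); [| apply Dconst| lra].
  apply (Dln (fun u => (Sq u - u ^ 3) / 2)); [| exact HL].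
  apply (Ddiv (fun u => Sq u - u ^ 3) (fun _ => 2)); [| apply Dconst| lra].
  apply (Dminus Sq (fun u => u ^ 3)); [| apply (Dpow (fun u => u) 3); apply Did].
  unfold Sq. apply (Dsqrt (fun u => u ^ 6 + 4)). apply (Dplus (fun u => u ^ 6) (fun _ => 4)).
  apply (Dpow (fun u => u) 6); apply Did. apply Dconst. pose proof (u6_nonneg u); lra.
  fold (Sq u). fold (cc u). simpl INR. simpl Nat.pred.
  set (c := cc u) in *. set (S := Sq u) in *. field. lra.
Qed.

Lemma h2_Sq u : h2 u = u ^ 3 / Sq u.
Proof. unfold h2, Sq. f_equal. f_equal. ring. Qed.

Lemma X2_der u : derivable_pt_lim X2 u ((1 + h2 u) * p1_2 (X2 u) * K2 u).
Proof.
  unfold X2. eapply Dext. apply (Dmult (fun u => u) cc). apply Did. apply cc_der.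
  rewrite h2_Sq. unfold p1_2, K2, X2.
  pose proof (Sq_pos u). pose proof (Sq_sq u) as HS2. assert (Hc3 : 2 * cc u ^ 3 = Sq u - u ^ 3) by (rewrite cc_cube; field).
  set (c := cc u) in *. set (S := Sq u) in *. clearbody c S.
  field_simplify_eq; [| lra]. cbn [pow] in *. nsatz.
Qed.

Lemma K2_der u : derivable_pt_lim K2 u ((1 + h2 u) * q2_2 (X2 u) * K2 u ^ 2).
Proof.
  unfold K2. eapply Dext. apply (Dopp cc). apply cc_der.
  rewrite h2_Sq. unfold q2_2, X2.
  pose proof (Sq_pos u). pose proof (Sq_sq u) as HS2. assert (Hc3 : 2 * cc u ^ 3 = Sq u - u ^ 3) by (rewrite cc_cube; field).
  set (c := cc u) in *. set (S := Sq u) in *. clearbody c S.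
  field_simplify_eq; [| lra]. cbn [pow] in *. nsatz.
Qed.

Lemma q0_2_eq u : - u * K2 u = (1 + h2 u) * q0_2 (X2 u).
Proof.
  rewrite h2_Sq. unfold q0_2, X2, K2.
  pose proof (Sq_pos u). pose proof (Sq_sq u) as HS2. assert (Hc3 : 2 * cc u ^ 3 = Sq u - u ^ 3) by (rewrite cc_cube; field).
  set (c := cc u) in *. set (S := Sq u) in *. clearbody c S.
  field_simplify_eq; [| lra]. cbn [pow] in *. nsatz.
Qed.

Lemma Sq_ge2 u : 2 <= Sq u.
Proof. pose proof (Sq_pos u). pose proof (Sq_sq u). pose proof (u6_nonneg u). nra. Qed.

Lemma cube_bounds u : Rabs u <= 1 -> -1 <= u ^ 3 <= 1.
Proof. intros H. apply Rabs_le_inv in H.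
  assert (0 <= (u + 1) * (u ^ 2 - u + 1)) by (apply Rmult_le_pos; nra).
  assert (0 <= (1 - u) * (u ^ 2 + u + 1)) by (apply Rmult_le_pos; nra).
  split; nra. Qed.

Lemma h2_odd u : h2 (- u) = - h2 u.
Proof. unfold h2. replace ((- u) ^ 6) with (u ^ 6) by ring. replace ((- u) ^ 3) with (- u ^ 3) by ring.
  unfold Rdiv; ring. Qed.

Lemma h2_cont u : continuity_pt h2 u.
Proof. unfold h2. pose proof (u6_nonneg u). cauto; try lra.
  apply Rgt_not_eq, sqrt_lt_R0; lra. Qed.

Lemma h2_bound u : Rabs u <= 1 -> / 2 <= 1 + h2 u.
Proof. intros H. rewrite h2_Sq. pose proof (cube_bounds u H). pose proof (Sq_ge2 u).
  apply Rmult_le_reg_r with (Sq u); [lra|]. field_simplify; lra. Qed.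

Lemma p1_2_neg u : p1_2 (X2 u) < 0.
Proof. unfold p1_2, X2. rewrite Rpow_mult_distr, cc_cube.
  pose proof (Sq_pos u). pose proof (Sq_sq u). set (t := u ^ 3) in *.
  replace (u ^ 6) with (t * t) in * by (unfold t; ring).
  destruct (Rle_dec t 0).
  - assert (t * Sq u <= 0) by nra. nra.
  - assert (t * Sq u < t * t + 2) by (assert ((t * Sq u) * (t * Sq u) < (t * t + 2) * (t * t + 2)) by nra; nra). nra.
Qed.

Lemma K2_bound u : Rabs u <= 1 -> K2 u <= - / 2.
Proof. intros H. unfold K2. pose proof (cube_bounds u H). pose proof (Sq_ge2 u). pose proof (cc_cube u).
  pose proof (cc_pos u). assert (/ 2 <= cc u ^ 3) by lra.
  destruct (Rle_dec (/2) (cc u)); [lra|]. exfalso.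
  assert (cc u ^ 3 < / 8) by (simpl; assert (cc u * cc u < /4) by nra; nra). lra. Qed.

Lemma X2_0 : X2 0 = 0.
Proof. unfold X2; ring. Qed.

Section Urabe2.
Variable x : R.
Hypothesis Hx : - / 2 < x < / 2.

Let Hx3 : 0 < 1 - x ^ 3.
Proof. assert (Rabs x <= 1) by (apply Rabs_le; lra). pose proof (cube_bounds x H).
  assert (x ^ 3 < 1). { destruct (Rle_dec x 0). nra. simpl. nra. } lra. Qed.

Let v := exp (- (1/6) * ln (1 - x ^ 3)).
Let Hv : 0 < v.
Proof. apply exp_pos. Qed.
Let Ea : exp (- (1/3) * ln (1 - x ^ 3)) = v ^ 2.
Proof. unfold v. rewrite <- exp_pow_nat. f_equal. simpl INR. field. Qed.
Let Eb : exp (2 * (- (7/6) * ln (1 - x ^ 3))) = v ^ 14.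
Proof. unfold v. rewrite <- exp_pow_nat. f_equal. simpl INR. field. Qed.
Let Ec : exp (- (7/6) * ln (1 - x ^ 3)) = v ^ 7.
Proof. unfold v. rewrite <- exp_pow_nat. f_equal. simpl INR. field. Qed.
Let Ed : v ^ 6 * (1 - x ^ 3) = 1.
Proof. unfold v. rewrite <- exp_pow_nat.
  replace (INR 6 * (- (1 / 6) * ln (1 - x ^ 3))) with (- ln (1 - x ^ 3)) by (simpl INR; field).
  rewrite exp_Ropp, exp_ln by exact Hx3. field. lra. Qed.

Lemma U2_F : derivable_pt_lim (fun x => - (7/6) * ln (1 - x ^ 3)) x (urabe_f p1_2 dp1_2 q2_2 x).
Proof. eapply Dext. dauto. exact Hx3. unfold urabe_f, p1_2, dp1_2, q2_2. simpl INR. simpl Nat.pred.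
  field. split; lra. Qed.

Lemma U2_Phi : derivable_pt_lim (fun x => / 2 * x ^ 2 * exp (- (1/3) * ln (1 - x ^ 3))) x
   (urabe_g p1_2 q0_2 x * exp (2 * (- (7/6) * ln (1 - x ^ 3)))).
Proof. eapply Dext. dauto. exact Hx3. rewrite Ea, Eb. unfold urabe_g, p1_2, q0_2. simpl INR. simpl Nat.pred.
  pose proof Ed. clearbody v. field_simplify_eq; [| lra]. cbn [pow] in *. nsatz. Qed.

Lemma U2_xi : / 2 * (x * exp (- (1/6) * ln (1 - x ^ 3))) ^ 2 = / 2 * x ^ 2 * exp (- (1/3) * ln (1 - x ^ 3)).
Proof. rewrite Ea. fold v. ring. Qed.

Lemma U2_pos : x <> 0 -> 0 < x * (x * exp (- (1/6) * ln (1 - x ^ 3))).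
Proof. intros. fold v. assert (0 < x * x) by nra. nra. Qed.

Lemma U2_rel : (x * exp (- (1/6) * ln (1 - x ^ 3))) / (1 + h2 (x * exp (- (1/6) * ln (1 - x ^ 3))))
  = urabe_g p1_2 q0_2 x * exp (- (7/6) * ln (1 - x ^ 3)).
Proof.
  fold v. rewrite Ec. unfold h2.
  assert (Hs : sqrt (4 + (x * v) ^ 6) = (2 - x ^ 3) * v ^ 3).
  { rewrite <- sqrt_square. f_equal. pose proof Ed. clearbody v. cbn [pow] in *. nsatz.
    apply Rmult_le_pos. lra. apply pow_le; lra. }
  rewrite Hs. unfold urabe_g, p1_2, q0_2.
  assert (0 < v ^ 3) by (apply pow_lt; lra).
  replace (1 + (x * v) ^ 3 / ((2 - x ^ 3) * v ^ 3)) with (2 / (2 - x ^ 3)) by (field; split; lra).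
  pose proof Ed. clearbody v. field_simplify_eq; [| lra].
  cbn [pow] in *. nsatz.
Qed.
End Urabe2.

Theorem part2 :
  ((forall x y, P2 x y = 0 + p1_2 x * y /\
                Q2 x y = q0_2 x + 0 * y + q2_2 x * y ^ 2) /\
   p1_2 0 <> 0 /\
   (forall x, derivable_pt_lim p1_2 x (dp1_2 x)) /\
   is_isochronous_center P2 Q2 /\
   is_urabe_function (urabe_f p1_2 dp1_2 q2_2) (urabe_g p1_2 q0_2) h2).
Proof.
  split; [| split; [| split; [| split]]].
  - intros x y. unfold P2, Q2, p1_2, q0_2, q2_2. split; ring.
  - unfold p1_2. simpl. lra.
  - intros x. unfold p1_2, dp1_2. eapply Dext. dauto. simpl. ring.
  - apply (generic_center P2 Q2 p1_2 q0_2 q2_2 h2 X2 K2 1 (/ 2)).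
    + intros; unfold P2, p1_2; ring.
    + intros; unfold Q2, q0_2, q2_2; ring.
    + lra.
    + lra.
    + exact h2_odd.
    + exact h2_cont.
    + exact h2_bound.
    + exact X2_0.
    + exact X2_der.
    + exact K2_der.
    + exact q0_2_eq.
    + intros; apply p1_2_neg.
    + exact K2_bound.
  - split; [exact h2_odd| split; [exact h2_analytic|]].
    exists (/ 2). split; [lra|].
    exists (fun x => - (7/6) * ln (1 - x ^ 3)), (fun x => / 2 * x ^ 2 * exp (- (1/3) * ln (1 - x ^ 3))),
      (fun x => x * exp (- (1/6) * ln (1 - x ^ 3))).
    split; [| split].
    + simpl. rewrite Rmult_0_l, Rminus_0_r, ln_1. ring.
    + simpl. ring.
    + intros x Hx. split; [| split; [| split; [| split]]].
      * apply U2_F; lra.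
      * apply U2_Phi; lra.
      * apply U2_xi; lra.
      * apply U2_pos; lra.
      * apply U2_rel; lra.
Qed.

Section Sys1.
Variable s : R.
Hypothesis Hs : s = 1 \/ s = -1.

Let Hs2 : s * s = 1.
Proof. destruct Hs; subst; ring. Qed.
Let Habs : Rabs s = 1.
Proof. destruct Hs as [E|E]; rewrite E. apply Rabs_R1. rewrite Rabs_left; lra. Qed.
Let r2 : sqrt 2 * sqrt 2 = 2.
Proof. apply sqrt_sqrt; lra. Qed.
Let r2pos : 1.4 < sqrt 2.
Proof. pose proof (sqrt_pos 2). nra. Qed.

Definition T1 (u : R) := sqrt (2 + 9 * u ^ 2).
Definition Y1 (u : R) := (1 + 6 * u ^ 2 + 2 * s * u * T1 u) / (1 + 4 * u ^ 2).
Definition V1 (u : R) := sqrt (Y1 u).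
Definition X1 (u : R) := s * (V1 u - 1) / sqrt 2.
Definition K1 (u : R) := - (T1 u + s * u) / (sqrt 2 * (1 + 4 * u ^ 2)).

Lemma T1_sq u : T1 u * T1 u = 2 + 9 * u ^ 2.
Proof. unfold T1. apply sqrt_sqrt. pose proof (pow2_ge_0 u). lra. Qed.
Lemma T1_pos u : 0 < T1 u.
Proof. unfold T1. apply sqrt_lt_R0. pose proof (pow2_ge_0 u). lra. Qed.
Lemma T1_big u : Rabs (s * u) * 3 < T1 u.
Proof. pose proof (T1_sq u). pose proof (T1_pos u).
  assert (Rabs (s * u) = Rabs u) by (rewrite Rabs_mult, Habs; ring).
  rewrite H1. pose proof (Rabs_pos u).
  assert (Rabs u * Rabs u = u ^ 2) by (rewrite <- Rabs_mult; simpl; rewrite Rmult_1_r; apply Rabs_right; nra).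
  nra. Qed.
Lemma key1 u : Rabs (s * u * T1 u) < 1 + 3 * u ^ 2.
Proof.
  assert (E : (s * u * T1 u) * (s * u * T1 u) = u ^ 2 * (2 + 9 * u ^ 2)).
  { transitivity ((s * s) * u ^ 2 * (T1 u * T1 u)); [ring|]. rewrite Hs2, T1_sq. ring. }
  pose proof (pow2_ge_0 u). set (w := s * u * T1 u) in *.
  assert (w * w < (1 + 3 * u ^ 2) * (1 + 3 * u ^ 2)) by nra.
  split_Rabs; nra.
Qed.
Lemma key2 u : Rabs (s * u * T1 u) < (1 + 6 * u ^ 2) / 2.
Proof.
  assert (E : (s * u * T1 u) * (s * u * T1 u) = u ^ 2 * (2 + 9 * u ^ 2)).
  { transitivity ((s * s) * u ^ 2 * (T1 u * T1 u)); [ring|]. rewrite Hs2, T1_sq. ring. }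
  pose proof (pow2_ge_0 u). set (w := s * u * T1 u) in *.
  assert (w * w < ((1 + 6 * u ^ 2) / 2) * ((1 + 6 * u ^ 2) / 2)) by nra.
  split_Rabs; nra.
Qed.
Lemma N1_pos u : 0 < 1 + 6 * u ^ 2 + 2 * s * u * T1 u.
Proof. pose proof (key2 u). pose proof (pow2_ge_0 u). revert H. split_Rabs; nra. Qed.
Lemma Y1_pos u : 0 < Y1 u.
Proof. unfold Y1. pose proof (N1_pos u). pose proof (pow2_ge_0 u). apply Rdiv_lt_0_compat; lra. Qed.
Lemma V1_sq u : V1 u * V1 u = Y1 u.
Proof. unfold V1. apply sqrt_sqrt. left; apply Y1_pos. Qed.
Lemma V1_pos u : 0 < V1 u.
Proof. unfold V1. apply sqrt_lt_R0, Y1_pos. Qed.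
Lemma Y1_lt3 u : Y1 u < 3.
Proof. unfold Y1. pose proof (key1 u). pose proof (pow2_ge_0 u).
  apply Rmult_lt_reg_r with (1 + 4 * u ^ 2); [lra|]. unfold Rdiv. rewrite Rmult_assoc, Rinv_l by lra.
  revert H. split_Rabs; nra. Qed.

Lemma D1_pos u : 0 < 1 + 4 * u ^ 2.
Proof. pose proof (pow2_ge_0 u); lra. Qed.

Lemma X1_der u : derivable_pt_lim X1 u ((1 + h1 s u) * p1_1 s (X1 u) * K1 u).
Proof.
  pose proof (Y1_pos u) as HY. pose proof (pow2_ge_0 u). pose proof (D1_pos u).
  unfold X1, V1. unfold Y1 in *. unfold T1 in *.
  eapply Dext. dauto.
  all: try lra.
  unfold h1, p1_1, K1. fold (T1 u). fold (Y1 u). fold (V1 u). fold (T1 u).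
  pose proof (V1_sq u) as HV. pose proof (V1_pos u). pose proof (T1_sq u) as HT. pose proof (T1_pos u).
  unfold Y1 in HV. simpl INR. simpl Nat.pred.
  set (V := V1 u) in *. set (T := T1 u) in *. set (r := sqrt 2) in *. clearbody V T r.
  assert (HV' : V * V * (1 + 4 * u ^ 2) = 1 + 6 * u ^ 2 + 2 * s * u * T) by (rewrite HV; field; lra).
  clear HV.
  assert (HTi : T * / T = 1) by (field; lra).
  assert (HVi : V * / V = 1) by (field; lra).
  assert (HDi : (1 + 4 * u ^ 2) * / (1 + 4 * u ^ 2) = 1) by (field; lra).
  assert (Hri : r * / r = 1) by (field; lra).
  set (Ti := / T) in *. set (Vi := / V) in *. set (Di := / (1 + 4 * u ^ 2)) in *. set (ri := / r) in *.
  clearbody Ti Vi Di ri.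
  field_simplify_eq; [| repeat split; lra].
  clear HTi HVi HDi Hri Habs HY H H0 H1 H2 r2pos Hs. 
  cbn [pow] in *; nsatz.
Qed.

Lemma K1_der u : derivable_pt_lim K1 u ((1 + h1 s u) * q2_1 s (X1 u) * K1 u ^ 2).
Proof.
  pose proof (pow2_ge_0 u). pose proof (D1_pos u). pose proof (T1_pos u).
  unfold K1. unfold T1 in *.
  eapply Dext. dauto.
  all: try lra.
  all: try (apply Rgt_not_eq; apply Rmult_lt_0_compat; lra).
  unfold h1, q2_1, X1. fold (T1 u).
  pose proof (V1_sq u) as HV. pose proof (V1_pos u). pose proof (T1_sq u) as HT. pose proof (T1_pos u).
  unfold Y1 in HV. simpl INR. simpl Nat.pred.
  set (V := V1 u) in *. set (T := T1 u) in *. set (r := sqrt 2) in *. clearbody V T r.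
  assert (HV' : V * V * (1 + 4 * u ^ 2) = 1 + 6 * u ^ 2 + 2 * s * u * T) by (rewrite HV; field; lra).
  clear HV.
  field_simplify_eq; [| repeat split; lra].
  nsatz_clean.
Qed.

Lemma q0_1_eq u : - u * K1 u = (1 + h1 s u) * q0_1 s (X1 u).
Proof.
  pose proof (pow2_ge_0 u). pose proof (D1_pos u). pose proof (T1_pos u).
  unfold K1, h1, q0_1, X1. fold (T1 u).
  pose proof (V1_sq u) as HV. pose proof (V1_pos u). pose proof (T1_sq u) as HT.
  unfold Y1 in HV.
  set (V := V1 u) in *. set (T := T1 u) in *. set (r := sqrt 2) in *. clearbody V T r.
  assert (HV' : V * V * (1 + 4 * u ^ 2) = 1 + 6 * u ^ 2 + 2 * s * u * T) by (rewrite HV; field; lra).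
  clear HV.
  field_simplify_eq; [| repeat split; lra].
  nsatz_clean.
Qed.

Lemma h1_odd u : h1 s (- u) = - h1 s u.
Proof. unfold h1. replace ((- u) ^ 2) with (u ^ 2) by ring. unfold Rdiv; ring. Qed.

Lemma h1_cont u : continuity_pt (h1 s) u.
Proof. unfold h1. pose proof (pow2_ge_0 u). cauto; try lra.
  apply Rgt_not_eq, sqrt_lt_R0; lra. Qed.

Lemma h1_bound u : / 2 <= 1 + h1 s u.
Proof. unfold h1. fold (T1 u). pose proof (T1_big u). pose proof (T1_pos u).
  apply Rmult_le_reg_r with (T1 u); [lra|]. unfold Rdiv.
  replace ((1 + - s * u * / T1 u) * T1 u) with (T1 u - s * u) by (field; lra).
  revert H. split_Rabs; lra. Qed.

Lemma X1_0 : X1 0 = 0.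
Proof. unfold X1, V1, Y1. replace (1 + 6 * 0 ^ 2 + 2 * s * 0 * T1 0) with 1 by ring.
  replace (1 + 4 * 0 ^ 2) with 1 by ring. unfold Rdiv. rewrite Rinv_1, Rmult_1_r, sqrt_1. ring. Qed.

Lemma p1_1_neg u : p1_1 s (X1 u) < 0.
Proof.
  assert (E : p1_1 s (X1 u) = - V1 u * (3 - V1 u * V1 u) / 2).
  { unfold p1_1, X1. set (V := V1 u). set (r := sqrt 2) in *. clearbody V r.
    field_simplify_eq; [| lra]. nsatz_clean. }
  rewrite E, V1_sq. pose proof (V1_pos u). pose proof (Y1_lt3 u).
  assert (0 < V1 u * (3 - Y1 u)) by (apply Rmult_lt_0_compat; lra). lra.
Qed.

Lemma K1_bound u : Rabs u <= / 10 -> K1 u <= - / 2.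
Proof.
  intros Hu. apply Rabs_le_inv in Hu. unfold K1.
  pose proof (T1_sq u). pose proof (T1_pos u). pose proof (D1_pos u).
  assert (HT : sqrt 2 <= T1 u) by nra.
  assert (Hsu : - / 10 <= s * u) by (destruct Hs as [E|E]; rewrite E; lra).
  assert (HD : 1 + 4 * u ^ 2 <= 1.04) by (simpl; nra).
  assert (Hp : 0 < sqrt 2 * (1 + 4 * u ^ 2)) by (apply Rmult_lt_0_compat; lra).
  apply Rmult_le_reg_r with (sqrt 2 * (1 + 4 * u ^ 2)); [lra|].
  unfold Rdiv. replace (- (T1 u + s * u) * / (sqrt 2 * (1 + 4 * u ^ 2)) * (sqrt 2 * (1 + 4 * u ^ 2)))
    with (- (T1 u + s * u)) by (field; lra).
  nra.
Qed.

Section Urabe1.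
Variable x : R.
Hypothesis Hx : - / 10 < x < / 10.

Let Hsx : - / 10 < s * x < / 10.
Proof. destruct Hs as [E|E]; rewrite E; lra. Qed.
Let HL1 : 0 < 1 + s * sqrt 2 * x.
Proof. assert (sqrt 2 < 1.5) by (pose proof (sqrt_pos 2); nra). 
  replace (s * sqrt 2 * x) with (sqrt 2 * (s * x)) by ring. nra. Qed.
Let HQ : 0 < 1 - s * sqrt 2 * x - x ^ 2.
Proof. assert (sqrt 2 < 1.5) by (pose proof (sqrt_pos 2); nra). 
  replace (s * sqrt 2 * x) with (sqrt 2 * (s * x)) by ring. simpl. nra. Qed.
Let Hm : 0 < 1 + s * x / sqrt 2.
Proof. assert (s * x / sqrt 2 = (s * x) * / sqrt 2) by (unfold Rdiv; ring).
  assert (0 < / sqrt 2 < 1) by (split; [apply Rinv_0_lt_compat; lra| rewrite <- Rinv_1; apply Rinv_lt_contravar; lra]).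
  nra. Qed.

Lemma p1_fact : p1_1 s x = - ((1 + s * sqrt 2 * x) * (1 - s * sqrt 2 * x - x ^ 2)).
Proof. unfold p1_1. set (r := sqrt 2) in *. clearbody r. nsatz_clean. Qed.

Lemma U1_F : derivable_pt_lim (fun x => - 2 * ln (1 + s * sqrt 2 * x) - 3 / 2 * ln (1 - s * sqrt 2 * x - x ^ 2)) x
   (urabe_f (p1_1 s) (dp1_1 s) (q2_1 s) x).
Proof.
  eapply Dext. dauto. all: try lra.
  unfold urabe_f, dp1_1, q2_1. simpl INR. simpl Nat.pred.
  rewrite p1_fact. set (r := sqrt 2) in *. clearbody r.
  field_simplify_eq; [| repeat split; lra]. nsatz_clean.
Qed.

Let L1 := 1 + s * sqrt 2 * x.
Let Qx := 1 - s * sqrt 2 * x - x ^ 2.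

Lemma E2F : exp (2 * (- 2 * ln (1 + s * sqrt 2 * x) - 3 / 2 * ln (1 - s * sqrt 2 * x - x ^ 2)))
  = / ((1 + s * sqrt 2 * x) ^ 4 * (1 - s * sqrt 2 * x - x ^ 2) ^ 3).
Proof.
  replace (2 * (- 2 * ln (1 + s * sqrt 2 * x) - 3 / 2 * ln (1 - s * sqrt 2 * x - x ^ 2)))
    with (- (INR 4 * ln (1 + s * sqrt 2 * x) + INR 3 * ln (1 - s * sqrt 2 * x - x ^ 2))) by (simpl; field).
  rewrite exp_Ropp, exp_plus, !exp_pow_nat, !exp_ln by lra. reflexivity.
Qed.

Lemma exp_half q : 0 < q -> exp (ln q / 2) = sqrt q.
Proof. intros Hq. assert (E : exp (ln q / 2) * exp (ln q / 2) = q).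
  { rewrite <- exp_plus. replace (ln q / 2 + ln q / 2) with (ln q) by field. apply exp_ln; auto. }
  transitivity (sqrt (exp (ln q / 2) * exp (ln q / 2))).
  - rewrite sqrt_square; [reflexivity| left; apply exp_pos].
  - rewrite E; reflexivity. Qed.

Lemma EF : exp (- 2 * ln (1 + s * sqrt 2 * x) - 3 / 2 * ln (1 - s * sqrt 2 * x - x ^ 2))
  = / ((1 + s * sqrt 2 * x) ^ 2 * (1 - s * sqrt 2 * x - x ^ 2) * sqrt (1 - s * sqrt 2 * x - x ^ 2)).
Proof.
  replace (- 2 * ln (1 + s * sqrt 2 * x) - 3 / 2 * ln (1 - s * sqrt 2 * x - x ^ 2))
    with (- (INR 2 * ln (1 + s * sqrt 2 * x) + ln (1 - s * sqrt 2 * x - x ^ 2) + ln (1 - s * sqrt 2 * x - x ^ 2) / 2)) by (simpl; field).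
  rewrite exp_Ropp, !exp_plus, exp_pow_nat, !exp_ln, exp_half by lra. reflexivity.
Qed.

Lemma U1_Phi : derivable_pt_lim
  (fun x => / 2 * (x * (1 + s * x / sqrt 2)) ^ 2 / ((1 + s * sqrt 2 * x) ^ 2 * (1 - s * sqrt 2 * x - x ^ 2))) x
  (urabe_g (p1_1 s) (q0_1 s) x * exp (2 * (- 2 * ln (1 + s * sqrt 2 * x) - 3 / 2 * ln (1 - s * sqrt 2 * x - x ^ 2)))).
Proof.
  eapply Dext. dauto. all: try (apply Rgt_not_eq; apply Rmult_lt_0_compat; try apply pow_lt; lra).
  all: try lra.
  rewrite E2F. unfold urabe_g, q0_1. rewrite p1_fact. simpl INR. simpl Nat.pred.
  set (r := sqrt 2) in *. clearbody r.
  assert (r <> 0) by lra.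
  field_simplify_eq; [| repeat split; lra]. nsatz_clean.
Qed.

Definition xi1 (x : R) := x * (1 + s * x / sqrt 2) / ((1 + s * sqrt 2 * x) * sqrt (1 - s * sqrt 2 * x - x ^ 2)).

Let Hsig : 0 < sqrt (1 - s * sqrt 2 * x - x ^ 2).
Proof. apply sqrt_lt_R0; lra. Qed.
Let Hsig2 : sqrt (1 - s * sqrt 2 * x - x ^ 2) * sqrt (1 - s * sqrt 2 * x - x ^ 2) = 1 - s * sqrt 2 * x - x ^ 2.
Proof. apply sqrt_sqrt; lra. Qed.

Lemma U1_xi : / 2 * xi1 x ^ 2 = / 2 * (x * (1 + s * x / sqrt 2)) ^ 2 / ((1 + s * sqrt 2 * x) ^ 2 * (1 - s * sqrt 2 * x - x ^ 2)).
Proof. unfold xi1. set (sg := sqrt (1 - s * sqrt 2 * x - x ^ 2)) in *. set (r := sqrt 2) in *. clearbody sg r.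
  field_simplify_eq; [| repeat split; lra]. nsatz_clean. Qed.

Lemma U1_pos : x <> 0 -> 0 < x * xi1 x.
Proof. intros. unfold xi1. unfold Rdiv.
  assert (0 < x * x) by nra.
  assert (0 < / ((1 + s * sqrt 2 * x) * sqrt (1 - s * sqrt 2 * x - x ^ 2))) by (apply Rinv_0_lt_compat, Rmult_lt_0_compat; lra).
  replace (x * (x * (1 + s * x * / sqrt 2) * / ((1 + s * sqrt 2 * x) * sqrt (1 - s * sqrt 2 * x - x ^ 2))))
    with ((x * x) * (1 + s * x / sqrt 2) * / ((1 + s * sqrt 2 * x) * sqrt (1 - s * sqrt 2 * x - x ^ 2))) by (unfold Rdiv; ring).
  apply Rmult_lt_0_compat; [apply Rmult_lt_0_compat|]; lra. Qed.

Lemma U1_sqrt : sqrt (2 + 9 * xi1 x ^ 2) = ((1 + s * sqrt 2 * x) ^ 2 + 3) / (2 * sqrt 2 * (1 + s * sqrt 2 * x) * sqrt (1 - s * sqrt 2 * x - x ^ 2)).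
Proof.
  set (B := ((1 + s * sqrt 2 * x) ^ 2 + 3) / (2 * sqrt 2 * (1 + s * sqrt 2 * x) * sqrt (1 - s * sqrt 2 * x - x ^ 2))).
  assert (HB : 0 <= B).
  { unfold B. left. apply Rdiv_lt_0_compat. pose proof (pow2_ge_0 (1 + s * sqrt 2 * x)); lra.
    repeat apply Rmult_lt_0_compat; lra. }
  rewrite <- (sqrt_square B HB). f_equal. unfold B, xi1.
  set (sg := sqrt (1 - s * sqrt 2 * x - x ^ 2)) in *. set (r := sqrt 2) in *. clearbody sg r.
  field_simplify_eq; [| repeat split; lra]. nsatz_clean.
Qed.

Lemma U1_rel : xi1 x / (1 + h1 s (xi1 x)) = urabe_g (p1_1 s) (q0_1 s) x * exp (- 2 * ln (1 + s * sqrt 2 * x) - 3 / 2 * ln (1 - s * sqrt 2 * x - x ^ 2)).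
Proof.
  assert (Hh : 1 + h1 s (xi1 x) = 4 / ((1 + s * sqrt 2 * x) ^ 2 + 3)).
  { unfold h1. rewrite U1_sqrt. unfold xi1.
    set (sg := sqrt (1 - s * sqrt 2 * x - x ^ 2)) in *. set (r := sqrt 2) in *. clearbody sg r.
    assert (0 < (1 + s * r * x) ^ 2 + 3) by (pose proof (pow2_ge_0 (1 + s * r * x)); lra).
    field_simplify_eq; [| repeat split; lra]. nsatz_clean. }
  rewrite Hh, EF. unfold urabe_g, q0_1. rewrite p1_fact. unfold xi1.
  set (sg := sqrt (1 - s * sqrt 2 * x - x ^ 2)) in *. set (r := sqrt 2) in *. clearbody sg r.
  assert (0 < (1 + s * r * x) ^ 2 + 3) by (pose proof (pow2_ge_0 (1 + s * r * x)); lra).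
  field_simplify_eq; [| repeat split; lra]. nsatz_clean.
Qed.
End Urabe1.
End Sys1.

Theorem part1 : forall s : R, (s = 1 \/ s = -1) ->
     (forall x y, P1 s x y = 0 + p1_1 s x * y /\
                  Q1 s x y = q0_1 s x + 0 * y + q2_1 s x * y ^ 2) /\
     p1_1 s 0 <> 0 /\
     (forall x, derivable_pt_lim (p1_1 s) x (dp1_1 s x)) /\
     is_isochronous_center (P1 s) (Q1 s) /\
     is_urabe_function (urabe_f (p1_1 s) (dp1_1 s) (q2_1 s))
                       (urabe_g (p1_1 s) (q0_1 s)) (h1 s).
Proof.
  intros s Hs.
  split; [| split; [| split; [| split]]].
  - intros x y. unfold P1, Q1, p1_1, q0_1, q2_1. split; ring.
  - unfold p1_1. simpl. lra.
  - intros x. unfold p1_1, dp1_1. eapply Dext. dauto. simpl. ring.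
  - apply (generic_center (P1 s) (Q1 s) (p1_1 s) (q0_1 s) (q2_1 s) (h1 s) (X1 s) (K1 s) (/ 10) (/ 2)).
    + intros; unfold P1, p1_1; ring.
    + intros; unfold Q1, q0_1, q2_1; ring.
    + lra.
    + lra.
    + apply h1_odd.
    + apply h1_cont.
    + intros; apply h1_bound; auto.
    + apply X1_0.
    + intros; apply X1_der; auto.
    + intros; apply K1_der; auto.
    + intros; apply q0_1_eq; auto.
    + intros; apply p1_1_neg; auto.
    + intros; apply K1_bound; auto.
  - split; [apply h1_odd| split; [apply h1_analytic|]].
    exists (/ 10). split; [lra|].
    exists (fun x => - 2 * ln (1 + s * sqrt 2 * x) - 3 / 2 * ln (1 - s * sqrt 2 * x - x ^ 2)),
      (fun x => / 2 * (x * (1 + s * x / sqrt 2)) ^ 2 / ((1 + s * sqrt 2 * x) ^ 2 * (1 - s * sqrt 2 * x - x ^ 2))),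
      (xi1 s).
    split; [| split].
    + simpl. replace (1 + s * sqrt 2 * 0) with 1 by ring. replace (1 - s * sqrt 2 * 0 - 0 * (0 * 1)) with 1 by ring. rewrite ln_1. ring.
    + simpl. unfold Rdiv. ring.
    + intros x Hx. split; [| split; [| split; [| split]]].
      * apply U1_F; auto.
      * apply U1_Phi; auto.
      * apply U1_xi; auto.
      * apply U1_pos; auto.
      * apply U1_rel; auto.
Qed.

Theorem mainTheorem1 :
  (forall s : R, (s = 1 \/ s = -1) ->
     (forall x y, P1 s x y = 0 + p1_1 s x * y /\
                  Q1 s x y = q0_1 s x + 0 * y + q2_1 s x * y ^ 2) /\
     p1_1 s 0 <> 0 /\
     (forall x, derivable_pt_lim (p1_1 s) x (dp1_1 s x)) /\
     is_isochronous_center (P1 s) (Q1 s) /\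
     is_urabe_function (urabe_f (p1_1 s) (dp1_1 s) (q2_1 s))
                       (urabe_g (p1_1 s) (q0_1 s)) (h1 s)) /\
  ((forall x y, P2 x y = 0 + p1_2 x * y /\
                Q2 x y = q0_2 x + 0 * y + q2_2 x * y ^ 2) /\
   p1_2 0 <> 0 /\
   (forall x, derivable_pt_lim p1_2 x (dp1_2 x)) /\
   is_isochronous_center P2 Q2 /\
   is_urabe_function (urabe_f p1_2 dp1_2 q2_2) (urabe_g p1_2 q0_2) h2).
Proof.
  split; [exact part1 | exact part2].
Qed.
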